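(* Let $N\geq 2$ be an integer and let $s_m,\sigma_x,\sigma_r,R_M$ be positive constants. Let $(s_i^0)_{1\leq i\leq N}\in(\mathbb{R}_+^* )^N$ and let $(x_i,y_i,S_i,\gamma_i)_{1\leq i\leq N}\in(\mathbb{R}^2\times(\mathbb{R}_+^* )^2)^N$, with $\log(S_i/s_m)\leq R_M$ for all $i$. Write $\vec x_i=(x_i,y_i)$ and $$C(s_i,s_j,d)=\frac{\log(s_j/s_m)}{2R_M\left(1+\frac{d^2}{\sigma_x^2}\right)}\left(1+\tanh\left(\frac{1}{\sigma_r}\log\frac{s_j}{s_i}\right)\right).$$ Then the system $$s_i(0)=s_i^0,\qquad \frac{\mathrm{d}s_i(t)}{\mathrm{d}t}=\gamma_i s_i(t)\left(\log\left(\frac{S_i}{s_m}\right)\left(1-\frac{1}{N-1}\sum_{j\neq i}C(s_i(t),s_j(t),|\vec x_i-\vec x_j|)\right)-\log\left(\frac{s_i(t)}{s_m}\right)\right),\quad 1\leq i\leq N,\ t\in\mathbb{R}_+,$$ has a unique solution $t\mapsto (s_i(t))_{1\leq i\leq N}$ defined on all of $\mathbb{R}_+$, and it takes positive values: $s_i(t)>0$ for all $t\in\mathbb{R}_+$ and all $i$.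
   Context: $|\vec x_i-\vec x_j|$ denotes the Euclidean distance in $\mathbb{R}^2$. *)

(* Defs.v *)
From Stdlib Require Import Reals Lra.
From Coquelicot Require Import Coquelicot.
Open Scope R_scope.

Definition dist2 (x1 y1 x2 y2 : R) : R := sqrt ((x1 - x2) ^ 2 + (y1 - y2) ^ 2).

Definition Ckernel (sm sx sr RM : R) (si sj d : R) : R :=
  ln (sj / sm) / (2 * RM * (1 + d ^ 2 / sx ^ 2))
  * (1 + tanh (/ sr * ln (sj / si))).

Definition sum_ne (N i : nat) (f : nat -> R) : R :=
  sum_f_R0 (fun j => if Nat.eq_dec j i then 0 else f j) (N - 1).

(* f has derivative f't at t as a function on [0, +oo):
   (f u - f t)/(u - t) -> f't as u -> t with u in [0,+oo), u <> t
   (one-sided at t = 0, two-sided for t > 0). *)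
Definition has_deriv_Rplus (f : R -> R) (t f't : R) : Prop :=
  filterlim (fun u => (f u - f t) / (u - t))
    (within (fun u => 0 <= u /\ u <> t) (locally t)) (locally f't).

Definition rhs (N : nat) (sm sx sr RM : R) (x y Sc gam : nat -> R)
  (s : nat -> R) (i : nat) : R :=
  gam i * s i *
  (ln (Sc i / sm) *
     (1 - / INR (N - 1) *
          sum_ne N i (fun j => Ckernel sm sx sr RM (s i) (s j) (dist2 (x i) (y i) (x j) (y j))))
   - ln (s i / sm)).

Definition is_solution (N : nat) (sm sx sr RM : R) (x y Sc gam s0 : nat -> R)
  (s : nat -> R -> R) : Prop :=
  (forall i, (i < N)%nat -> s i 0 = s0 i) /\
  (forall i t, (i < N)%nat -> 0 <= t ->
     has_deriv_Rplus (s i) t (rhs N sm sx sr RM x y Sc gam (fun j => s j t) i)).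

(* Main.v *)
Require Import Defs.
From Stdlib Require Import Reals.
From Coquelicot Require Import Coquelicot.
From Stdlib Require Import Lra Lia Classical ZArith.
Open Scope R_scope.


Fixpoint sumN (n : nat) (f : nat -> R) : R :=
  match n with O => 0 | S k => sumN k f + f k end.

Lemma sumN_ext n f g : (forall j, (j < n)%nat -> f j = g j) -> sumN n f = sumN n g.
Proof. induction n; simpl; intros H; auto. rewrite IHn by (intros; apply H; lia). rewrite H by lia; auto. Qed.

Lemma sumN_le n f g : (forall j, (j < n)%nat -> f j <= g j) -> sumN n f <= sumN n g.
Proof. induction n; simpl; intros H; [lra|]. assert (H1 := H n ltac:(lia)). assert (sumN n f <= sumN n g) by (apply IHn; intros; apply H; lia). lra. Qed.

Lemma sumN_nonneg n f : (forall j, (j < n)%nat -> 0 <= f j) -> 0 <= sumN n f.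
Proof. induction n; simpl; intros H; [lra|]. assert (H1 := H n ltac:(lia)). assert (0 <= sumN n f) by (apply IHn; intros; apply H; lia). lra. Qed.

Lemma sumN_plus n f g : sumN n (fun j => f j + g j) = sumN n f + sumN n g.
Proof. induction n; simpl; [lra|]. rewrite IHn; lra. Qed.

Lemma sumN_scal n c f : sumN n (fun j => c * f j) = c * sumN n f.
Proof. induction n; simpl; [lra|]. rewrite IHn; lra. Qed.

Lemma sumN_const n c : sumN n (fun _ => c) = INR n * c.
Proof. induction n; cbn [sumN]; [simpl; lra|]. rewrite IHn, S_INR; lra. Qed.

Lemma sumN_abs n f : Rabs (sumN n f) <= sumN n (fun j => Rabs (f j)).
Proof. induction n; simpl; [rewrite Rabs_R0; lra|].
  eapply Rle_trans; [apply Rabs_triang|]. lra. Qed.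

Lemma sumN_term n f i : (i < n)%nat -> (forall j, (j < n)%nat -> 0 <= f j) -> f i <= sumN n f.
Proof. induction n; simpl; intros Hi H; [lia|].
  assert (0 <= sumN n f) by (apply sumN_nonneg; intros; apply H; lia).
  destruct (Nat.eq_dec i n). subst; lra.
  assert (f i <= sumN n f) by (apply IHn; [lia| intros; apply H; lia]).
  assert (H2 := H n ltac:(lia)). lra. Qed.

Lemma sum_f_R0_sumN n f : sum_f_R0 f n = sumN (S n) f.
Proof. induction n; simpl; [lra|]. rewrite IHn; simpl; lra. Qed.

Lemma two_ab a b : 2 * a * b <= a ^ 2 + b ^ 2.
Proof. replace (a ^ 2 + b ^ 2) with ((a - b) ^ 2 + 2 * a * b) by ring.
  assert (0 <= (a - b) ^ 2) by apply pow2_ge_0. lra. Qed.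

Lemma sumN_cs_aux n x c : 2 * c * sumN n x <= sumN n (fun j => x j ^ 2) + INR n * c ^ 2.
Proof. induction n; cbn [sumN]; [simpl; lra|]. rewrite S_INR.
  assert (2 * c * x n <= x n ^ 2 + c ^ 2).
  { replace (2 * c * x n) with (2 * x n * c) by ring. apply two_ab. }
  assert (IH := IHn). set (S0 := sumN n x) in *. set (Q := sumN n (fun j => x j ^ 2)) in *.
  replace (2 * c * (S0 + x n)) with (2 * c * S0 + 2 * c * x n) by ring.
  replace ((INR n + 1) * c ^ 2) with (INR n * c ^ 2 + c ^ 2) by ring. lra. Qed.

Lemma sumN_cs n x : (sumN n x) ^ 2 <= INR n * sumN n (fun j => x j ^ 2).
Proof. induction n; cbn [sumN]; [simpl; lra|]. rewrite S_INR.
  assert (H := sumN_cs_aux n x (x n)).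
  assert (0 <= sumN n (fun j => x j ^ 2)) by (apply sumN_nonneg; intros; nra).
  set (S0 := sumN n x) in *. set (Q := sumN n (fun j => x j ^ 2)) in *.
  assert (0 <= INR n) by apply pos_INR.
  assert (0 <= x n ^ 2) by apply pow2_ge_0.
  replace ((S0 + x n) ^ 2) with (S0 ^ 2 + 2 * x n * S0 + x n ^ 2) by ring.
  replace ((INR n + 1) * (Q + x n ^ 2)) with (INR n * Q + (Q + INR n * x n ^ 2) + x n ^ 2) by ring.
  lra. Qed.


Lemma lip_cont f K x : 0 <= K -> (forall y z, Rabs (f y - f z) <= K * Rabs (y - z)) -> continuity_pt f x.
Proof.
  intros HK H eps Heps. exists (eps / (K + 1)). split.
  - apply Rdiv_lt_0_compat; lra.
  - intros y [_ Hy]. unfold R_dist in *. simpl in *. unfold R_dist in *.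
    eapply Rle_lt_trans; [apply H|].
    apply Rle_lt_trans with (K * (eps / (K + 1))).
    + apply Rmult_le_compat_l; lra.
    + apply Rlt_le_trans with ((K + 1) * (eps / (K + 1))).
      * apply Rmult_lt_compat_r; [apply Rdiv_lt_0_compat|]; lra.
      * right; field; lra.
Qed.

Lemma cpt_continuous f x : continuity_pt f x -> continuous f x.
Proof. intros H. apply continuity_pt_filterlim in H. exact H. Qed.

Lemma ex_RInt_cont h a b : (forall x, continuity_pt h x) -> ex_RInt h a b.
Proof. intros H. apply (ex_RInt_continuous (V := R_CompleteNormedModule)). intros z _. apply cpt_continuous, H. Qed.

Lemma int_bound h a b M : (forall x, continuity_pt h x) ->
  (forall x, Rmin a b <= x <= Rmax a b -> Rabs (h x) <= M) ->
  Rabs (RInt h a b) <= M * Rabs (b - a).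
Proof.
  intros Hc Hb. destruct (Rle_dec a b) as [Hab|Hab].
  - rewrite Rmin_left, Rmax_right in Hb by lra.
    rewrite (Rabs_right (b - a)) by lra. rewrite Rmult_comm.
    apply abs_RInt_le_const; auto. apply ex_RInt_cont; auto.
  - rewrite Rmin_right, Rmax_left in Hb by lra.
    rewrite <- opp_RInt_swap by (apply ex_RInt_cont; auto).
    change (Rabs (- RInt h b a) <= M * Rabs (b - a)).
    rewrite Rabs_Ropp, (Rabs_left (b - a)) by lra.
    replace (- (b - a)) with (a - b) by ring. rewrite Rmult_comm.
    apply abs_RInt_le_const; auto; try lra. apply ex_RInt_cont; auto.
Qed.

Lemma RInt_diff h t t' : (forall x, continuity_pt h x) ->
  RInt h 0 t - RInt h 0 t' = RInt h t' t.
Proof.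
  intros Hc. rewrite <- (RInt_Chasles h 0 t' t) by (apply ex_RInt_cont; auto).
  change (RInt h 0 t' + RInt h t' t - RInt h 0 t' = RInt h t' t). ring.
Qed.

Lemma RInt_minus_R f g a b : (forall x, continuity_pt f x) -> (forall x, continuity_pt g x) ->
  RInt (fun x => f x - g x) a b = RInt f a b - RInt g a b.
Proof. intros Hf Hg. apply (RInt_minus f g); apply ex_RInt_cont; auto. Qed.

Lemma cont_minus f g : (forall x, continuity_pt f x) -> (forall x, continuity_pt g x) ->
  forall x, continuity_pt (fun y => f y - g y) x.
Proof. intros Hf Hg x. apply continuity_pt_minus; auto. Qed.

Lemma int_exp_bound f c k t : 0 < k -> 0 <= t -> (forall x, continuity_pt f x) ->
  (forall x, 0 <= x <= t -> Rabs (f x) <= c * exp (k * x)) ->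
  Rabs (RInt f 0 t) <= c / k * (exp (k * t) - 1).
Proof.
  intros Hk Ht Hc Hb.
  assert (HI : is_RInt (fun x => c * exp (k * x)) 0 t (minus (c / k * exp (k * t)) (c / k * exp (k * 0)))).
  { apply (is_RInt_derive (fun x => c / k * exp (k * x))).
    - intros x _. apply is_derive_Reals.
      replace (c * exp (k * x)) with (c / k * (exp (k * x) * (k * 1))) by (field; lra).
      apply derivable_pt_lim_scal.
      apply (derivable_pt_lim_comp (fun x => k * x) exp).
      + apply derivable_pt_lim_scal, derivable_pt_lim_id.
      + apply derivable_pt_lim_exp.
    - intros x _. apply cpt_continuous.
      apply continuity_pt_mult; [apply continuity_pt_const; intros ?; auto|].
      apply (continuity_pt_comp (fun x => k * x) exp).
      + apply continuity_pt_mult; [apply continuity_pt_const; intros ?; auto| apply continuity_pt_id].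
      + apply derivable_continuous_pt, derivable_pt_exp. }
  assert (H := norm_RInt_le f (fun x => c * exp (k * x)) 0 t (RInt f 0 t) _ Ht Hb
     (RInt_correct _ _ _ (ex_RInt_cont _ _ _ Hc)) HI).
  change (Rabs (RInt f 0 t) <= c / k * exp (k * t) - c / k * exp (k * 0)) in H.
  rewrite Rmult_0_r, exp_0 in H. lra.
Qed.

Lemma small_pow a c : (forall n, a <= c * (/ 2) ^ n) -> a <= 0.
Proof.
  intros H. destruct (Rle_dec a 0) as [|Ha]; auto. exfalso.
  assert (Hc : 0 < c). { specialize (H O). simpl in H. lra. }
  destruct (pow_lt_1_zero (/ 2) ltac:(rewrite Rabs_right; lra) (a / c) ltac:(apply Rdiv_lt_0_compat; lra)) as [n0 Hn].
  specialize (Hn n0 (le_n _)). specialize (H n0).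
  rewrite Rabs_right in Hn by (apply Rle_ge, pow_le; lra).
  apply (Rmult_lt_compat_l c) in Hn; auto.
  replace (c * (a / c)) with a in Hn by (field; lra). lra.
Qed.


Lemma exp_mono x y : x <= y -> exp x <= exp y.
Proof. intros [H|H]; [left; apply exp_increasing; auto| subst; lra]. Qed.

Lemma Rmax0_lip x y : Rabs (Rmax 0 x - Rmax 0 y) <= Rabs (x - y).
Proof. unfold Rmax; destruct (Rle_dec 0 x), (Rle_dec 0 y);
  unfold Rabs; repeat destruct Rcase_abs; lra. Qed.

Lemma Rmax0_nonneg x : 0 <= Rmax 0 x.
Proof. apply Rmax_l. Qed.

Definition Flip (N : nat) (F : (nat -> R) -> nat -> R) (L : R) :=
  forall u v i, (i < N)%nat -> Rabs (F u i - F v i) <= L * sumN N (fun j => Rabs (u j - v j)).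

Lemma F_ext N F L u v i : Flip N F L -> (i < N)%nat -> (forall j, (j < N)%nat -> u j = v j) -> F u i = F v i.
Proof.
  intros HL Hi H. assert (H1 := HL u v i Hi).
  rewrite (sumN_ext _ _ (fun _ => 0)) in H1 by (intros j Hj; rewrite H by auto; rewrite Rminus_diag, Rabs_R0; auto).
  rewrite sumN_const, Rmult_0_r, Rmult_0_r in H1.
  assert (Rabs (F u i - F v i) = 0) by (apply Rle_antisym; auto; apply Rabs_pos).
  destruct (Req_dec (F u i - F v i) 0); [lra|]. apply Rabs_no_R0 in H2; tauto.
Qed.

Lemma comp_lip N F L B (v : nat -> R -> R) i : Flip N F L -> 0 <= L -> 0 <= B -> (i < N)%nat ->
  (forall j x y, (j < N)%nat -> 0 <= x -> 0 <= y -> Rabs (v j x - v j y) <= B * Rabs (x - y)) ->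
  forall x, continuity_pt (fun tau => F (fun j => v j (Rmax 0 tau)) i) x.
Proof.
  intros HL HL0 HB0 Hi Hv x. apply (lip_cont _ (L * (INR N * B))).
  { apply Rmult_le_pos; auto. apply Rmult_le_pos; auto; apply pos_INR. }
  intros y z. eapply Rle_trans; [apply HL; auto|].
  rewrite Rmult_assoc. apply Rmult_le_compat_l; auto.
  replace (INR N * B * Rabs (y - z)) with (sumN N (fun _ => B * Rabs (y - z))) by (rewrite sumN_const; ring).
  apply sumN_le. intros j Hj.
  eapply Rle_trans; [apply Hv; auto; apply Rmax0_nonneg|].
  apply Rmult_le_compat_l; auto. apply Rmax0_lip.
Qed.

Fixpoint pic (F : (nat -> R) -> nat -> R) (u0 : nat -> R) (n : nat) : nat -> R -> R :=
  match n with
  | O => fun i _ => u0 i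
  | S m => fun i t => u0 i + RInt (fun tau => F (fun j => pic F u0 m j (Rmax 0 tau)) i) 0 t
  end.

Definition Fbnd (N : nat) (F : (nat -> R) -> nat -> R) (B : R) :=
  forall u i, (i < N)%nat -> Rabs (F u i) <= B.

Lemma pic_lip N F L B u0 : Flip N F L -> Fbnd N F B -> 0 <= L -> 0 <= B ->
  forall n i x y, (i < N)%nat -> Rabs (pic F u0 n i x - pic F u0 n i y) <= B * Rabs (x - y).
Proof.
  intros HL HB HL0 HB0. induction n; intros i x y Hi; simpl.
  - rewrite Rminus_diag, Rabs_R0. apply Rmult_le_pos; auto; apply Rabs_pos.
  - assert (Hc := comp_lip N F L B (pic F u0 n) i HL HL0 HB0 Hi ltac:(intros; apply IHn; auto)).
    replace (u0 i + RInt (fun tau => F (fun j => pic F u0 n j (Rmax 0 tau)) i) 0 x -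
      (u0 i + RInt (fun tau => F (fun j => pic F u0 n j (Rmax 0 tau)) i) 0 y)) with
      (RInt (fun tau => F (fun j => pic F u0 n j (Rmax 0 tau)) i) 0 x -
       RInt (fun tau => F (fun j => pic F u0 n j (Rmax 0 tau)) i) 0 y) by ring.
    rewrite RInt_diff by auto. apply int_bound; auto.
Qed.

Lemma addK a b : a + b - a = b.
Proof. ring. Qed.
Lemma addK2 a b c : a + b - (a + c) = b - c.
Proof. ring. Qed.

Definition hpic F u0 n (i : nat) := fun tau => F (fun j => pic F u0 n j (Rmax 0 tau)) i.

Lemma pic_S F u0 n j t : pic F u0 (S n) j t = u0 j + RInt (hpic F u0 n j) 0 t.
Proof. reflexivity. Qed.

Lemma hpic_cont N F L B u0 n i : Flip N F L -> Fbnd N F B -> 0 <= L -> 0 <= B -> (i < N)%nat ->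
  forall x, continuity_pt (hpic F u0 n i) x.
Proof. intros. apply (comp_lip N F L B); auto. intros; apply (pic_lip N F L B); auto. Qed.

Definition Dn N F u0 n t := sumN N (fun j => Rabs (pic F u0 (S n) j t - pic F u0 n j t)).

Lemma bie N F L B u0 : Flip N F L -> Fbnd N F B -> 0 <= L -> 0 <= B ->
  forall n t, 0 <= t -> Dn N F u0 n t <= INR N * B * (/ 2) ^ n * exp ((2 * INR N * L + 1) * t).
Proof.
  intros HL HB HL0 HB0. set (k := 2 * INR N * L + 1).
  assert (HN : 0 <= INR N) by apply pos_INR.
  assert (HNL : 0 <= INR N * L) by (apply Rmult_le_pos; auto).
  assert (Hk : 1 <= k) by (unfold k; lra).
  assert (HC : 0 <= INR N * B) by (apply Rmult_le_pos; auto).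
  induction n; intros t Ht.
  - unfold Dn. apply Rle_trans with (sumN N (fun _ => B * t)).
    + apply sumN_le; intros j Hj. rewrite pic_S. simpl pic.
      rewrite addK.
      replace t with (Rabs (t - 0)) at 2 by (rewrite Rminus_0_r, Rabs_right; lra).
      apply int_bound; [apply (hpic_cont N F L B); auto|]. intros; apply HB; auto.
    + rewrite sumN_const. simpl pow. rewrite Rmult_1_r, <- Rmult_assoc.
      apply Rmult_le_compat_l; auto.
      assert (H1 := exp_ineq1_le (k * t)). assert (0 <= (k - 1) * t) by (apply Rmult_le_pos; lra).
      lra.
  - unfold Dn.
    set (c := L * (INR N * B * (/ 2) ^ n)).
    assert (Hc : 0 <= c) by (apply Rmult_le_pos; auto; apply Rmult_le_pos; auto; apply pow_le; lra).
    apply Rle_trans with (sumN N (fun _ => c / k * (exp (k * t) - 1))).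
    + apply sumN_le; intros j Hj. rewrite (pic_S F u0 (S n)), (pic_S F u0 n).
      rewrite addK2.
      rewrite <- RInt_minus_R by (apply (hpic_cont N F L B); auto).
      apply int_exp_bound; auto; [lra| |].
      * apply cont_minus; apply (hpic_cont N F L B); auto.
      * intros x Hx. unfold hpic. eapply Rle_trans; [apply HL; auto|].
        rewrite Rmax_right by lra. unfold c. rewrite Rmult_assoc. apply Rmult_le_compat_l; auto.
        apply IHn. lra.
    + rewrite sumN_const. rewrite <- tech_pow_Rmult.
      assert (He : 1 <= exp (k * t)) by (rewrite <- exp_0; apply exp_mono; apply Rmult_le_pos; lra).
      set (q := INR N * B * (/ 2) ^ n).
      assert (Hq : 0 <= q) by (apply Rmult_le_pos; auto; apply pow_le; lra).
      replace (INR N * B * (/ 2 * (/ 2) ^ n)) with (/ 2 * q) by (unfold q; ring).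
      unfold c. fold q. set (e := exp (k * t)) in *.
      replace (INR N * (L * q / k * (e - 1))) with ((INR N * L) * (q * (e - 1)) / k) by (field; lra).
      apply Rle_trans with (k / 2 * (q * (e - 1)) / k).
      * unfold Rdiv. apply Rmult_le_compat_r; [left; apply Rinv_0_lt_compat; lra|].
        apply Rmult_le_compat_r; [apply Rmult_le_pos; lra| unfold k; lra].
      * replace (k / 2 * (q * (e - 1)) / k) with (/ 2 * (q * e) - / 2 * q) by (field; lra).
        assert (0 <= / 2 * q) by (apply Rmult_le_pos; lra). nra.
Qed.

Lemma pic_cauchy N F L B u0 : Flip N F L -> Fbnd N F B -> 0 <= L -> 0 <= B ->
  forall n p i t, (i < N)%nat -> 0 <= t ->
  Rabs (pic F u0 (n + p) i t - pic F u0 n i t) <=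
    2 * (INR N * B) * exp ((2 * INR N * L + 1) * t) * ((/ 2) ^ n - (/ 2) ^ (n + p)).
Proof.
  intros HL HB HL0 HB0 n p i t Hi Ht. induction p.
  - rewrite Nat.add_0_r, Rminus_diag, Rabs_R0, Rminus_diag, Rmult_0_r. lra.
  - replace (n + S p)%nat with (S (n + p)) by lia.
    assert (H1 : Rabs (pic F u0 (S (n + p)) i t - pic F u0 (n + p) i t) <= Dn N F u0 (n + p) t).
    { unfold Dn. apply (sumN_term N (fun j => Rabs (pic F u0 (S (n + p)) j t - pic F u0 (n + p) j t))); auto.
      intros; apply Rabs_pos. }
    assert (H2 := bie N F L B u0 HL HB HL0 HB0 (n + p) t Ht).
    apply Rle_trans with
      (2 * (INR N * B) * exp ((2 * INR N * L + 1) * t) * ((/ 2) ^ n - (/ 2) ^ (n + p))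
       + INR N * B * (/ 2) ^ (n + p) * exp ((2 * INR N * L + 1) * t)).
    + replace (pic F u0 (S (n + p)) i t - pic F u0 n i t) with
        ((pic F u0 (n + p) i t - pic F u0 n i t) + (pic F u0 (S (n + p)) i t - pic F u0 (n + p) i t)) by ring.
      eapply Rle_trans; [apply Rabs_triang|]. lra.
    + right. cbn [pow]. set (a := (/ 2) ^ n). set (b := (/ 2) ^ (n + p)). set (e := exp ((2 * INR N * L + 1) * t)). set (C := INR N * B). lra.
Qed.

Definition ulim F u0 (i : nat) (t : R) := real (Lim_seq (fun n => pic F u0 n i t)).

Lemma ulim_spec N F L B u0 : Flip N F L -> Fbnd N F B -> 0 <= L -> 0 <= B ->
  forall i t n, (i < N)%nat -> 0 <= t ->
  Rabs (ulim F u0 i t - pic F u0 n i t) <= 2 * (INR N * B) * exp ((2 * INR N * L + 1) * t) * (/ 2) ^ n.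
Proof.
  intros HL HB HL0 HB0 i t n Hi Ht.
  set (c := 2 * (INR N * B) * exp ((2 * INR N * L + 1) * t)).
  assert (Hc : 0 <= c).
  { unfold c. apply Rmult_le_pos; [|left; apply exp_pos]. apply Rmult_le_pos; [lra|].
    apply Rmult_le_pos; auto; apply pos_INR. }
  assert (Hcau : forall n p, Rabs (pic F u0 (n + p) i t - pic F u0 n i t) <= c * (/ 2) ^ n).
  { intros m p. eapply Rle_trans; [apply (pic_cauchy N F L B); auto|]. fold c.
    apply Rmult_le_compat_l; auto. assert (0 <= (/ 2) ^ (m + p)) by (apply pow_le; lra). lra. }
  assert (Hex : ex_finite_lim_seq (fun n => pic F u0 n i t)).
  { apply ex_lim_seq_cauchy_corr. intros eps.
    destruct (pow_lt_1_zero (/ 2) ltac:(rewrite Rabs_right; lra) (eps / (2 * c + 1))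
      ltac:(apply Rdiv_lt_0_compat; [apply cond_pos| lra])) as [n0 Hn0].
    exists n0. intros m m' Hm Hm'.
    assert (H0 := Hn0 n0 (le_n _)). rewrite Rabs_right in H0 by (apply Rle_ge, pow_le; lra).
    assert (Ha := Hcau n0 (m - n0)%nat). assert (Hb := Hcau n0 (m' - n0)%nat).
    replace (n0 + (m - n0))%nat with m in Ha by lia. replace (n0 + (m' - n0))%nat with m' in Hb by lia.
    replace (pic F u0 m i t - pic F u0 m' i t) with
      ((pic F u0 m i t - pic F u0 n0 i t) - (pic F u0 m' i t - pic F u0 n0 i t)) by ring.
    eapply Rle_lt_trans; [apply Rabs_triang|]. rewrite Rabs_Ropp.
    apply Rle_lt_trans with (2 * c * (/ 2) ^ n0); [lra|].
    apply Rle_lt_trans with ((2 * c + 1) * (/ 2) ^ n0).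
    { apply Rmult_le_compat_r; [apply pow_le|]; lra. }
    apply (Rmult_lt_compat_l (2 * c + 1)) in H0; [|lra].
    replace ((2 * c + 1) * (eps / (2 * c + 1))) with (pos eps) in H0 by (field; lra). exact H0. }
  destruct Hex as [l Hl].
  unfold ulim. rewrite (is_lim_seq_unique _ _ Hl). simpl.
  apply Rle_plus_epsilon. intros eps Heps.
  apply is_lim_seq_spec in Hl. destruct (Hl (mkposreal eps Heps)) as [M HM].
  assert (H1 := HM (M + n)%nat ltac:(lia)). simpl in H1.
  assert (H2 := Hcau n M). replace (n + M)%nat with (M + n)%nat in H2 by lia.
  replace (l - pic F u0 n i t) with (-(pic F u0 (M + n) i t - l) + (pic F u0 (M + n) i t - pic F u0 n i t)) by ring.
  eapply Rle_trans; [apply Rabs_triang|]. rewrite Rabs_Ropp. lra.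
Qed.

Lemma ulim_lip N F L B u0 : Flip N F L -> Fbnd N F B -> 0 <= L -> 0 <= B ->
  forall j x y, (j < N)%nat -> 0 <= x -> 0 <= y ->
  Rabs (ulim F u0 j x - ulim F u0 j y) <= B * Rabs (x - y).
Proof.
  intros HL HB HL0 HB0 j x y Hj Hx Hy.
  set (k := 2 * INR N * L + 1).
  cut (Rabs (ulim F u0 j x - ulim F u0 j y) - B * Rabs (x - y) <= 0); [lra|].
  apply (small_pow _ (2 * (INR N * B) * exp (k * x) + 2 * (INR N * B) * exp (k * y))).
  intros n.
  assert (H1 := ulim_spec N F L B u0 HL HB HL0 HB0 j x n Hj Hx).
  assert (H2 := ulim_spec N F L B u0 HL HB HL0 HB0 j y n Hj Hy).
  assert (H3 := pic_lip N F L B u0 HL HB HL0 HB0 n j x y Hj).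
  fold k in H1, H2.
  replace (ulim F u0 j x - ulim F u0 j y) with
    ((ulim F u0 j x - pic F u0 n j x) + (pic F u0 n j x - pic F u0 n j y) + - (ulim F u0 j y - pic F u0 n j y)) by ring.
  assert (H4 := Rabs_triang (ulim F u0 j x - pic F u0 n j x + (pic F u0 n j x - pic F u0 n j y)) (- (ulim F u0 j y - pic F u0 n j y))).
  assert (H5 := Rabs_triang (ulim F u0 j x - pic F u0 n j x) (pic F u0 n j x - pic F u0 n j y)).
  rewrite Rabs_Ropp in H4. lra.
Qed.

Definition hlim F u0 (i : nat) := fun tau => F (fun j => ulim F u0 j (Rmax 0 tau)) i.
Definition Ufun F u0 (i : nat) (t : R) := u0 i + RInt (hlim F u0 i) 0 t.

Lemma hlim_cont N F L B u0 i : Flip N F L -> Fbnd N F B -> 0 <= L -> 0 <= B -> (i < N)%nat ->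
  forall x, continuity_pt (hlim F u0 i) x.
Proof. intros. apply (comp_lip N F L B); auto. intros; apply (ulim_lip N F L B); auto. Qed.

Lemma U_eq N F L B u0 : Flip N F L -> Fbnd N F B -> 0 <= L -> 0 <= B ->
  forall i t, (i < N)%nat -> 0 <= t -> Ufun F u0 i t = ulim F u0 i t.
Proof.
  intros HL HB HL0 HB0 i t Hi Ht.
  set (k := 2 * INR N * L + 1).
  set (c := 2 * (INR N * B) * exp (k * t)).
  assert (Hc : 0 <= c).
  { unfold c. apply Rmult_le_pos; [|left; apply exp_pos]. apply Rmult_le_pos; [lra|].
    apply Rmult_le_pos; auto; apply pos_INR. }
  cut (Rabs (ulim F u0 i t - Ufun F u0 i t) <= 0).
  { intros H. assert (H0 := Rabs_pos (ulim F u0 i t - Ufun F u0 i t)).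
    destruct (Req_dec (ulim F u0 i t - Ufun F u0 i t) 0); [lra|].
    apply Rabs_no_R0 in H1. lra. }
  apply (small_pow _ (c + L * INR N * c * t)). intros n.
  assert (H1 := ulim_spec N F L B u0 HL HB HL0 HB0 i t (S n) Hi Ht). fold k c in H1.
  assert (H2 : Rabs (pic F u0 (S n) i t - Ufun F u0 i t) <= L * INR N * c * (/ 2) ^ n * t).
  { rewrite pic_S. unfold Ufun. rewrite addK2.
    rewrite <- RInt_minus_R by (first [apply (hpic_cont N F L B) | apply (hlim_cont N F L B)]; auto).
    replace (L * INR N * c * (/ 2) ^ n * t) with ((L * INR N * c * (/ 2) ^ n) * Rabs (t - 0))
      by (rewrite Rminus_0_r, Rabs_right; lra).
    apply int_bound.
    { apply cont_minus; [apply (hpic_cont N F L B) | apply (hlim_cont N F L B)]; auto. }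
    rewrite Rmin_left, Rmax_right by lra. intros x Hx.
    unfold hpic, hlim. eapply Rle_trans; [apply HL; auto|].
    rewrite Rmax_right by lra. rewrite !Rmult_assoc. apply Rmult_le_compat_l; auto.
    replace (INR N * (c * (/ 2) ^ n)) with (sumN N (fun _ => c * (/ 2) ^ n)) by (rewrite sumN_const; ring).
    apply sumN_le. intros j Hj. rewrite Rabs_minus_sym.
    eapply Rle_trans; [apply (ulim_spec N F L B); auto; lra|].
    unfold c. apply Rmult_le_compat_r; [apply pow_le; lra|].
    apply Rmult_le_compat_l; [apply Rmult_le_pos; [lra| apply Rmult_le_pos; auto; apply pos_INR]|].
    apply exp_mono. unfold k. apply Rmult_le_compat_l; [|lra].
    assert (0 <= INR N * L) by (apply Rmult_le_pos; auto; apply pos_INR). lra. }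
  replace (ulim F u0 i t - Ufun F u0 i t) with
    ((ulim F u0 i t - pic F u0 (S n) i t) + (pic F u0 (S n) i t - Ufun F u0 i t)) by ring.
  eapply Rle_trans; [apply Rabs_triang|].
  assert (c * (/ 2) ^ S n <= c * (/ 2) ^ n).
  { apply Rmult_le_compat_l; auto. cbn [pow]. assert (0 <= (/ 2) ^ n) by (apply pow_le; lra). lra. }
  assert (L * INR N * c * (/ 2) ^ n * t = L * INR N * c * t * (/ 2) ^ n) by ring.
  lra.
Qed.

Lemma U_deriv N F L B u0 : Flip N F L -> Fbnd N F B -> 0 <= L -> 0 <= B ->
  forall i t, (i < N)%nat -> derivable_pt_lim (Ufun F u0 i) t (hlim F u0 i t).
Proof.
  intros HL HB HL0 HB0 i t Hi.
  unfold Ufun. rewrite <- (Rplus_0_l (hlim F u0 i t)).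
  apply derivable_pt_lim_plus; [apply derivable_pt_lim_const|].
  apply is_derive_Reals.
  apply (is_derive_RInt (hlim F u0 i) (fun b => RInt (hlim F u0 i) 0 b) 0 t).
  - apply filter_forall. intros b. apply (RInt_correct (V := R_CompleteNormedModule)), ex_RInt_cont.
    apply (hlim_cont N F L B); auto.
  - apply cpt_continuous. apply (hlim_cont N F L B); auto.
Qed.

Theorem picard N F L B u0 : Flip N F L -> Fbnd N F B -> 0 <= L -> 0 <= B ->
  (forall i, (i < N)%nat -> Ufun F u0 i 0 = u0 i) /\
  (forall i t, (i < N)%nat -> continuity_pt (Ufun F u0 i) t) /\
  (forall i t, (i < N)%nat -> 0 <= t -> derivable_pt_lim (Ufun F u0 i) t (F (fun j => Ufun F u0 j t) i)).
Proof.
  intros HL HB HL0 HB0. split; [|split].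
  - intros i Hi. unfold Ufun. rewrite RInt_point. change (u0 i + 0 = u0 i). ring.
  - intros i t Hi. apply derivable_continuous_pt. exists (hlim F u0 i t).
    apply (U_deriv N F L B); auto.
  - intros i t Hi Ht. assert (H := U_deriv N F L B u0 HL HB HL0 HB0 i t Hi).
    replace (F (fun j => Ufun F u0 j t) i) with (hlim F u0 i t); auto.
    unfold hlim. rewrite Rmax_right by lra. apply (F_ext N F L); auto.
    intros j Hj. symmetry. apply (U_eq N F L B); auto.
Qed.


Lemma decr f df a b : a <= b -> (forall x, a <= x <= b -> continuity_pt f x) ->
  (forall x, a < x < b -> derivable_pt_lim f x (df x)) -> (forall x, a <= x <= b -> df x <= 0) ->
  f b <= f a.
Proof.
  intros Hab Hc Hd Hn.
  destruct (MVT_gen f a b df) as [c [Hc1 Hc2]].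
  - rewrite Rmin_left, Rmax_right by lra. intros x Hx. apply is_derive_Reals, Hd; auto.
  - rewrite Rmin_left, Rmax_right by lra. auto.
  - rewrite Rmin_left, Rmax_right in Hc1 by lra.
    assert (H := Hn c Hc1). assert (df c * (b - a) <= 0).
    { replace (df c * (b - a)) with (- ((- df c) * (b - a))) by ring.
      assert (0 <= - df c * (b - a)) by (apply Rmult_le_pos; lra). lra. }
    lra.
Qed.

Lemma cont_sumN n (g : nat -> R -> R) x : (forall i, (i < n)%nat -> continuity_pt (g i) x) ->
  continuity_pt (fun t => sumN n (fun i => g i t)) x.
Proof.
  induction n; intros H; cbn [sumN].
  - apply continuity_pt_const. intros ? ?; auto.
  - apply (continuity_pt_plus (fun t => sumN n (fun i => g i t)) (g n)).
    + apply IHn; intros; apply H; lia.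
    + apply H; lia.
Qed.

Lemma deriv_sumN n (g dg : nat -> R -> R) x : (forall i, (i < n)%nat -> derivable_pt_lim (g i) x (dg i x)) ->
  derivable_pt_lim (fun t => sumN n (fun i => g i t)) x (sumN n (fun i => dg i x)).
Proof.
  induction n; intros H; cbn [sumN].
  - apply derivable_pt_lim_const.
  - apply (derivable_pt_lim_plus (fun t => sumN n (fun i => g i t)) (g n)).
    + apply IHn; intros; apply H; lia.
    + apply H; lia.
Qed.

Lemma deriv_sq f x l : derivable_pt_lim f x l -> derivable_pt_lim (fun t => f t * f t) x (2 * (f x * l)).
Proof.
  intros H. replace (2 * (f x * l)) with (l * f x + f x * l) by ring.
  apply (derivable_pt_lim_mult f f); auto.
Qed.

Lemma gron_sq N (w dw : nat -> R -> R) c kap T : 0 <= kap ->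
  (forall i t, (i < N)%nat -> 0 <= t <= T -> continuity_pt (w i) t) ->
  (forall i t, (i < N)%nat -> 0 < t < T -> derivable_pt_lim (w i) t (dw i t)) ->
  (forall t, 0 <= t <= T -> 2 * sumN N (fun i => w i t * dw i t) <= kap * (c + sumN N (fun i => w i t * w i t))) ->
  forall t, 0 <= t <= T -> c + sumN N (fun i => w i t * w i t) <= (c + sumN N (fun i => w i 0 * w i 0)) * exp (kap * t).
Proof.
  intros Hk Hc Hd Hb t Ht.
  set (f := fun x => (c + sumN N (fun i => w i x * w i x)) * exp (- kap * x)).
  set (df := fun x => (2 * sumN N (fun i => w i x * dw i x)) * exp (- kap * x) +
                      (c + sumN N (fun i => w i x * w i x)) * (exp (- kap * x) * (- kap * 1))).
  assert (Hdec : f t <= f 0).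
  { apply (decr f df 0 t); try lra.
    - intros x Hx. unfold f. apply (continuity_pt_mult (fun x => c + sumN N (fun i => w i x * w i x)) (fun x => exp (- kap * x))).
      + apply (continuity_pt_plus (fun _ => c) (fun x => sumN N (fun i => w i x * w i x))).
        * apply continuity_pt_const; intros ? ?; auto.
        * apply (cont_sumN N (fun i x => w i x * w i x)). intros i Hi.
          apply (continuity_pt_mult (w i) (w i)); apply Hc; auto; lra.
      + apply (continuity_pt_comp (fun x => - kap * x) exp).
        * apply derivable_continuous_pt. exists (- kap * 1).
          apply derivable_pt_lim_scal, derivable_pt_lim_id.
        * apply derivable_continuous_pt, derivable_pt_exp.
    - intros x Hx. unfold f, df.
      apply (derivable_pt_lim_mult (fun x => c + sumN N (fun i => w i x * w i x)) (fun x => exp (- kap * x))).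
      + rewrite <- (Rplus_0_l (2 * _)).
        apply (derivable_pt_lim_plus (fun _ => c) (fun x => sumN N (fun i => w i x * w i x))).
        * apply derivable_pt_lim_const.
        * rewrite <- sumN_scal.
          apply (deriv_sumN N (fun i x => w i x * w i x) (fun i x => 2 * (w i x * dw i x))).
          intros i Hi. apply deriv_sq. apply Hd; auto; lra.
      + apply (derivable_pt_lim_comp (fun x => - kap * x) exp).
        * apply derivable_pt_lim_scal, derivable_pt_lim_id.
        * apply derivable_pt_lim_exp.
    - intros x Hx. unfold df.
      assert (H := Hb x ltac:(lra)). assert (He := exp_pos (- kap * x)).
      replace (2 * sumN N (fun i => w i x * dw i x) * exp (- kap * x) +
        (c + sumN N (fun i => w i x * w i x)) * (exp (- kap * x) * (- kap * 1))) with
        (exp (- kap * x) * (2 * sumN N (fun i => w i x * dw i x) - kap * (c + sumN N (fun i => w i x * w i x)))) by ring.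
      assert (0 <= exp (- kap * x) * (kap * (c + sumN N (fun i => w i x * w i x)) - 2 * sumN N (fun i => w i x * dw i x)))
        by (apply Rmult_le_pos; lra).
      lra. }
  unfold f in Hdec. rewrite Rmult_0_r, exp_0, Rmult_1_r in Hdec.
  apply (Rmult_le_compat_r (exp (kap * t))) in Hdec; [|left; apply exp_pos].
  rewrite Rmult_assoc, <- exp_plus in Hdec. replace (- kap * t + kap * t) with 0 in Hdec by ring.
  rewrite exp_0, Rmult_1_r in Hdec. exact Hdec.
Qed.


Lemma sq_abs x : Rabs x * Rabs x = x * x.
Proof. rewrite <- Rabs_mult. apply Rabs_right. apply Rle_ge, Rle_0_sqr. Qed.

Lemma abs_le_1sq x : 2 * Rabs x <= 1 + x * x.
Proof. rewrite <- sq_abs. assert (H := two_ab (Rabs x) 1). simpl in H. lra. Qed.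

Lemma cs_abs N x : sumN N (fun j => Rabs (x j)) * sumN N (fun j => Rabs (x j)) <= INR N * sumN N (fun j => x j * x j).
Proof.
  assert (H := sumN_cs N (fun j => Rabs (x j))). simpl in H.
  rewrite Rmult_1_r in H. rewrite (sumN_ext N (fun j => Rabs (x j) * (Rabs (x j) * 1)) (fun j => x j * x j)) in H.
  - exact H.
  - intros; rewrite Rmult_1_r; apply sq_abs.
Qed.

Lemma sum_w_dw N (w dw : nat -> R) K : 0 <= K ->
  (forall i, (i < N)%nat -> Rabs (dw i) <= K) ->
  sumN N (fun i => w i * dw i) <= K * sumN N (fun i => Rabs (w i)).
Proof.
  intros HK H. rewrite <- sumN_scal. apply sumN_le. intros i Hi.
  apply Rle_trans with (Rabs (w i * dw i)); [apply Rle_abs|]. rewrite Rabs_mult.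
  rewrite Rmult_comm. apply Rmult_le_compat_r; [apply Rabs_pos| auto].
Qed.

Lemma apriori N (u d : nat -> R -> R) A Bc T : 0 <= A -> 0 <= Bc ->
  (forall i t, (i < N)%nat -> 0 <= t <= T -> continuity_pt (u i) t) ->
  (forall i t, (i < N)%nat -> 0 < t < T -> derivable_pt_lim (u i) t (d i t)) ->
  (forall i t, (i < N)%nat -> 0 <= t <= T -> Rabs (d i t) <= A + Bc * sumN N (fun j => Rabs (u j t))) ->
  forall i t, (i < N)%nat -> 0 <= t <= T ->
  Rabs (u i t) <= (1 + sumN N (fun j => u j 0 * u j 0)) * exp ((A * (INR N + 1) + 2 * Bc * INR N) * t).
Proof.
  intros HA HB Hc Hd Hb i t Hi Ht.
  assert (HN : 0 <= INR N) by apply pos_INR.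
  assert (Hg := gron_sq N u d 1 (A * (INR N + 1) + 2 * Bc * INR N) T).
  eapply Rle_trans; [| apply Hg; auto].
  - assert (H1 := abs_le_1sq (u i t)).
    assert (H2 := Rabs_pos (u i t)).
    assert (u i t * u i t <= sumN N (fun j => u j t * u j t)).
    { apply (sumN_term N (fun j => u j t * u j t)); auto. intros; apply Rle_0_sqr. }
    lra.
  - assert (0 <= A * (INR N + 1)) by (apply Rmult_le_pos; lra).
    assert (0 <= 2 * Bc * INR N) by (apply Rmult_le_pos; lra). lra.
  - intros s Hs.
    set (S := sumN N (fun j => Rabs (u j s))). set (Q := sumN N (fun j => u j s * u j s)).
    assert (HS : 0 <= S) by (apply sumN_nonneg; intros; apply Rabs_pos).
    assert (HQ : 0 <= Q) by (apply sumN_nonneg; intros; apply Rle_0_sqr).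
    assert (H1 : sumN N (fun i => u i s * d i s) <= (A + Bc * S) * S).
    { apply sum_w_dw; [apply Rplus_le_le_0_compat; auto; apply Rmult_le_pos; auto|]. intros; apply Hb; auto. }
    assert (H2 : 2 * S <= INR N + Q).
    { unfold S, Q. rewrite <- sumN_scal. rewrite <- (Rmult_1_r (INR N)), <- sumN_const, <- sumN_plus.
      apply sumN_le. intros; apply abs_le_1sq. }
    assert (H3 : S * S <= INR N * Q) by apply cs_abs.
    assert (H4 : 2 * ((A + Bc * S) * S) = A * (2 * S) + 2 * Bc * (S * S)) by ring.
    assert (H5 : A * (2 * S) <= A * (INR N + Q)) by (apply Rmult_le_compat_l; auto).
    assert (H6 : 2 * Bc * (S * S) <= 2 * Bc * (INR N * Q)) by (apply Rmult_le_compat_l; lra).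
    assert (H7 : A * (INR N + Q) <= A * (INR N + 1) * (1 + Q)).
    { rewrite Rmult_assoc. apply Rmult_le_compat_l; auto.
      assert (0 <= INR N * Q) by (apply Rmult_le_pos; auto).
      replace ((INR N + 1) * (1 + Q)) with (INR N + Q + 1 + INR N * Q) by ring. lra. }
    assert (H8 : 2 * Bc * (INR N * Q) <= 2 * Bc * INR N * (1 + Q)).
    { rewrite (Rmult_assoc (2 * Bc)). apply Rmult_le_compat_l; [lra|].
      replace (INR N * (1 + Q)) with (INR N + INR N * Q) by ring. lra. }
    replace ((A * (INR N + 1) + 2 * Bc * INR N) * (1 + Q)) with
      (A * (INR N + 1) * (1 + Q) + 2 * Bc * INR N * (1 + Q)) by ring.
    lra.
Qed.

Lemma uniq_gen N (G : (nat -> R) -> nat -> R) (u v : nat -> R -> R) T K L : 0 <= L ->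
  (forall w w' i, (i < N)%nat -> (forall j, (j < N)%nat -> Rabs (w j) <= K) ->
     (forall j, (j < N)%nat -> Rabs (w' j) <= K) ->
     Rabs (G w i - G w' i) <= L * sumN N (fun j => Rabs (w j - w' j))) ->
  (forall i t, (i < N)%nat -> 0 <= t <= T -> continuity_pt (u i) t) ->
  (forall i t, (i < N)%nat -> 0 <= t <= T -> continuity_pt (v i) t) ->
  (forall i t, (i < N)%nat -> 0 < t < T -> derivable_pt_lim (u i) t (G (fun j => u j t) i)) ->
  (forall i t, (i < N)%nat -> 0 < t < T -> derivable_pt_lim (v i) t (G (fun j => v j t) i)) ->
  (forall j t, (j < N)%nat -> 0 <= t <= T -> Rabs (u j t) <= K) ->
  (forall j t, (j < N)%nat -> 0 <= t <= T -> Rabs (v j t) <= K) ->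
  (forall j, (j < N)%nat -> u j 0 = v j 0) ->
  forall i t, (i < N)%nat -> 0 <= t <= T -> u i t = v i t.
Proof.
  intros HL0 HGL Hcu Hcv Hdu Hdv Hbu Hbv H0 i t Hi Ht.
  assert (HN : 0 <= INR N) by apply pos_INR.
  assert (Hg := gron_sq N (fun j t => u j t - v j t) (fun j t => G (fun k => u k t) j - G (fun k => v k t) j)
     0 (2 * L * INR N) T ltac:(apply Rmult_le_pos; lra)).
  assert (Hg' : 0 + sumN N (fun j => (u j t - v j t) * (u j t - v j t)) <=
     (0 + sumN N (fun j => (u j 0 - v j 0) * (u j 0 - v j 0))) * exp (2 * L * INR N * t)).
  { apply Hg; auto.
    - intros j s Hj Hs. apply (continuity_pt_minus (u j) (v j)); auto.
    - intros j s Hj Hs. apply (derivable_pt_lim_minus (u j) (v j)); auto.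
    - intros s Hs.
      set (S := sumN N (fun j => Rabs (u j s - v j s))). set (Q := sumN N (fun j => (u j s - v j s) * (u j s - v j s))).
      assert (HS : 0 <= S) by (apply sumN_nonneg; intros; apply Rabs_pos).
      assert (H1 : sumN N (fun j => (u j s - v j s) * (G (fun k => u k s) j - G (fun k => v k s) j)) <= (L * S) * S).
      { apply sum_w_dw; [apply Rmult_le_pos; auto|]. intros j Hj. apply HGL; auto; intros; auto. }
      assert (H3 : S * S <= INR N * Q) by (apply (cs_abs N (fun j => u j s - v j s))).
      assert (L * (S * S) <= L * (INR N * Q)) by (apply Rmult_le_compat_l; auto).
      replace (2 * L * INR N * (0 + Q)) with (2 * (L * (INR N * Q))) by ring.
      replace (L * S * S) with (L * (S * S)) in H1 by ring. lra. }
  rewrite (sumN_ext N (fun j => (u j 0 - v j 0) * (u j 0 - v j 0)) (fun _ => 0)) in Hg' by (intros j Hj; cbv beta; rewrite H0; auto; ring).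
  rewrite sumN_const in Hg'.
  assert (Hz : (u i t - v i t) * (u i t - v i t) <= sumN N (fun j => (u j t - v j t) * (u j t - v j t))).
  { apply (sumN_term N (fun j => (u j t - v j t) * (u j t - v j t))); auto. intros; apply Rle_0_sqr. }
  replace ((0 + INR N * 0) * exp (2 * L * INR N * t)) with 0 in Hg' by ring.
  assert (Hsq : (u i t - v i t) * (u i t - v i t) = 0).
  { apply Rle_antisym; [lra| apply Rle_0_sqr]. }
  apply Rmult_integral in Hsq. lra.
Qed.


Lemma tanh_alt x : tanh x = 1 - 2 / (exp (2 * x) + 1).
Proof.
  unfold tanh, sinh, cosh. assert (H := exp_pos x).
  replace (2 * x) with (x + x) by ring. rewrite exp_plus, exp_Ropp.
  assert (0 < exp x * exp x) by (apply Rmult_lt_0_compat; auto).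
  field. split; lra.
Qed.

Lemma tanh_bound x : Rabs (tanh x) <= 1.
Proof.
  rewrite tanh_alt. assert (H := exp_pos (2 * x)).
  assert (0 < 2 / (exp (2 * x) + 1)) by (apply Rdiv_lt_0_compat; lra).
  assert (2 / (exp (2 * x) + 1) < 2).
  { apply (Rmult_lt_reg_r (exp (2 * x) + 1)); [lra|]. unfold Rdiv. rewrite Rmult_assoc, Rinv_l by lra. lra. }
  unfold Rabs; destruct Rcase_abs; lra.
Qed.

Lemma tanh_lip a b : Rabs (tanh a - tanh b) <= Rabs (a - b).
Proof.
  set (g := fun x => 1 - 2 / (exp (2 * x) + 1)).
  set (dg := fun x => 4 * exp (2 * x) / ((exp (2 * x) + 1) * (exp (2 * x) + 1))).
  assert (Hd : forall x, is_derive g x (dg x)).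
  { intros x. unfold g, dg. auto_derive.
    - assert (H := exp_pos (2 * x)). lra.
    - assert (H := exp_pos (2 * x)). field. lra. }
  assert (Hb : forall x, Rabs (dg x) <= 1).
  { intros x. unfold dg. set (E := exp (2 * x)). assert (HE : 0 < E) by apply exp_pos.
    rewrite Rabs_right.
    - apply (Rmult_le_reg_r ((E + 1) * (E + 1))); [apply Rmult_lt_0_compat; lra|].
      unfold Rdiv. rewrite Rmult_assoc, Rinv_l by (apply Rgt_not_eq, Rmult_lt_0_compat; lra).
      assert (0 <= (E - 1) * (E - 1)) by apply Rle_0_sqr. lra.
    - apply Rle_ge. unfold Rdiv. apply Rmult_le_pos; [lra|]. left; apply Rinv_0_lt_compat, Rmult_lt_0_compat; lra. }
  rewrite !tanh_alt. fold (g a) (g b).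
  destruct (MVT_gen g b a dg) as [c [_ Hc]].
  - intros; apply Hd.
  - intros x _. apply derivable_continuous_pt. exists (dg x). apply is_derive_Reals, Hd.
  - rewrite Hc, Rabs_mult. rewrite <- (Rmult_1_l (Rabs (a - b))) at 2.
    apply Rmult_le_compat_r; [apply Rabs_pos| apply Hb].
Qed.


Definition Gf (N : nat) (sm sx sr RM : R) (x y Sc gam : nat -> R) (u : nat -> R) (i : nat) : R :=
  gam i * (ln (Sc i / sm) *
     (1 - / INR (N - 1) * sum_ne N i (fun j =>
        u j / (2 * RM * (1 + dist2 (x i) (y i) (x j) (y j) ^ 2 / sx ^ 2)) * (1 + tanh (/ sr * (u j - u i)))))
   - u i).

Lemma sum_ne_sumN N i f : (1 <= N)%nat ->
  sum_ne N i f = sumN N (fun j => if Nat.eq_dec j i then 0 else f j).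
Proof. intros H. unfold sum_ne. rewrite sum_f_R0_sumN. f_equal. lia. Qed.

Lemma sum_ne_ext N i f g : (1 <= N)%nat -> (forall j, (j < N)%nat -> f j = g j) -> sum_ne N i f = sum_ne N i g.
Proof.
  intros HN H.
  rewrite !sum_ne_sumN by lia. apply sumN_ext. intros j Hj. destruct Nat.eq_dec; auto.
Qed.

Lemma sum_ne_abs N i f : (1 <= N)%nat -> Rabs (sum_ne N i f) <= sumN N (fun j => Rabs (f j)).
Proof.
  intros H. rewrite sum_ne_sumN by auto. eapply Rle_trans; [apply sumN_abs|].
  apply sumN_le. intros j Hj. destruct Nat.eq_dec; [rewrite Rabs_R0; apply Rabs_pos| lra].
Qed.

Lemma sum_ne_minus N i f g : sum_ne N i f - sum_ne N i g = sum_ne N i (fun j => f j - g j).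
Proof.
  unfold sum_ne. rewrite <- minus_sum. apply sum_eq. intros j _. destruct Nat.eq_dec; ring.
Qed.

Lemma Gf_ext N sm sx sr RM x y Sc gam u v i : (i < N)%nat -> (forall j, (j < N)%nat -> u j = v j) ->
  Gf N sm sx sr RM x y Sc gam u i = Gf N sm sx sr RM x y Sc gam v i.
Proof.
  intros Hi H. unfold Gf. rewrite (H i Hi). f_equal. f_equal. f_equal. f_equal. f_equal.
  apply sum_ne_ext; [lia|]. intros j Hj. rewrite (H j Hj). reflexivity.
Qed.

Lemma rhs_ext N sm sx sr RM x y Sc gam s s' i : (i < N)%nat -> (forall j, (j < N)%nat -> s j = s' j) ->
  rhs N sm sx sr RM x y Sc gam s i = rhs N sm sx sr RM x y Sc gam s' i.
Proof.
  intros Hi H. unfold rhs. rewrite (H i Hi). f_equal. f_equal. f_equal. f_equal. f_equal.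
  apply sum_ne_ext; [lia|]. intros j Hj. rewrite (H j Hj). reflexivity.
Qed.

Lemma rhs_exp N sm sx sr RM x y Sc gam u i : 0 < sm -> (i < N)%nat ->
  rhs N sm sx sr RM x y Sc gam (fun j => sm * exp (u j)) i = sm * exp (u i) * Gf N sm sx sr RM x y Sc gam u i.
Proof.
  intros Hsm Hi. unfold rhs, Gf, Ckernel.
  assert (E1 : forall a, ln (sm * exp a / sm) = a).
  { intros a. replace (sm * exp a / sm) with (exp a) by (field; lra). apply ln_exp. }
  assert (E2 : forall a b, ln (sm * exp a / (sm * exp b)) = a - b).
  { intros a b. replace (sm * exp a / (sm * exp b)) with (exp (a - b)).
    - apply ln_exp.
    - unfold Rminus. rewrite exp_plus, exp_Ropp. field. split; [apply Rgt_not_eq, exp_pos| lra]. }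
  rewrite E1. rewrite <- (Rmult_assoc (sm * exp (u i))), (Rmult_comm (sm * exp (u i)) (gam i)).
  f_equal. f_equal. f_equal. f_equal. f_equal.
  apply sum_ne_ext; [lia|]. intros j Hj. rewrite E1, E2. reflexivity.
Qed.


Lemma cij_bound RM sx d : 0 < RM -> 0 < sx ->
  0 <= / (2 * RM * (1 + d ^ 2 / sx ^ 2)) <= / (2 * RM).
Proof.
  intros HR Hs. assert (0 <= d ^ 2 / sx ^ 2).
  { apply Rmult_le_pos; [apply pow2_ge_0| left; apply Rinv_0_lt_compat, pow_lt; auto]. }
  split.
  - left; apply Rinv_0_lt_compat. apply Rmult_lt_0_compat; lra.
  - apply Rinv_le_contravar; [lra|]. rewrite <- (Rmult_1_r (2 * RM)) at 1.
    apply Rmult_le_compat_l; lra.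
Qed.

Lemma invN1 N : (2 <= N)%nat -> 0 < / INR (N - 1) <= 1.
Proof.
  intros H. assert (H1 : 1 <= INR (N - 1)) by (rewrite <- INR_1; apply le_INR; lia).
  split; [apply Rinv_0_lt_compat; lra|]. rewrite <- Rinv_1. apply Rinv_le_contravar; lra.
Qed.

Lemma one_tanh z : Rabs (1 + tanh z) <= 2.
Proof. assert (H := tanh_bound z). unfold Rabs in *; repeat destruct Rcase_abs; lra. Qed.

Lemma term_abs a c cm z : 0 <= c <= cm -> Rabs (a * c * (1 + tanh z)) <= Rabs a * cm * 2.
Proof.
  intros Hc. rewrite !Rabs_mult. rewrite (Rabs_right c) by lra.
  apply Rmult_le_compat; try apply Rabs_pos; try apply one_tanh.
  - apply Rmult_le_pos; [apply Rabs_pos| lra].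
  - apply Rmult_le_compat_l; [apply Rabs_pos| lra].
Qed.

Lemma term_lip a b a' b' c cm K s : 0 <= c <= cm -> 0 <= K -> 0 < s -> Rabs a' <= K ->
  Rabs (a * c * (1 + tanh (s * (a - b))) - a' * c * (1 + tanh (s * (a' - b')))) <=
  cm * (2 * Rabs (a - a') + K * s * (Rabs (a - a') + Rabs (b - b'))).
Proof.
  intros Hc HK Hs Ha.
  replace (a * c * (1 + tanh (s * (a - b))) - a' * c * (1 + tanh (s * (a' - b')))) with
    (c * ((a - a') * (1 + tanh (s * (a - b))) + a' * (tanh (s * (a - b)) - tanh (s * (a' - b'))))) by ring.
  rewrite Rabs_mult, (Rabs_right c) by lra.
  apply Rmult_le_compat; try lra; [apply Rabs_pos|].
  eapply Rle_trans; [apply Rabs_triang|]. rewrite !Rabs_mult.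
  apply Rplus_le_compat.
  - rewrite Rmult_comm. apply Rmult_le_compat_r; [apply Rabs_pos| apply one_tanh].
  - rewrite Rmult_assoc. apply Rmult_le_compat; try apply Rabs_pos; auto.
    eapply Rle_trans; [apply tanh_lip|].
    replace (s * (a - b) - s * (a' - b')) with (s * ((a - a') - (b - b'))) by ring.
    rewrite Rabs_mult, (Rabs_right s) by lra. apply Rmult_le_compat_l; [lra|].
    unfold Rminus at 1. eapply Rle_trans; [apply Rabs_triang|]. rewrite Rabs_Ropp. lra.
Qed.

Definition gsum N (gam : nat -> R) := sumN N gam.
Definition asum N sm (Sc : nat -> R) := sumN N (fun j => Rabs (ln (Sc j / sm))).
Definition Aconst N sm Sc gam := gsum N gam * asum N sm Sc.
Definition Bconst N sm RM Sc gam := gsum N gam * (asum N sm Sc / RM + 1).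
Definition LKc N sm sr RM Sc gam K := gsum N gam * (asum N sm Sc * (INR N * ((1 + K * / sr) / RM)) + 1).

Lemma gsum_ge N gam i : (i < N)%nat -> (forall j, (j < N)%nat -> 0 < gam j) -> gam i <= gsum N gam.
Proof. intros Hi H. apply sumN_term; auto. intros; left; auto. Qed.
Lemma asum_ge N sm Sc i : (i < N)%nat -> Rabs (ln (Sc i / sm)) <= asum N sm Sc.
Proof. intros Hi. apply (sumN_term N (fun j => Rabs (ln (Sc j / sm)))); auto. intros; apply Rabs_pos. Qed.
Lemma asum_pos N sm Sc : 0 <= asum N sm Sc.
Proof. apply sumN_nonneg. intros; apply Rabs_pos. Qed.
Lemma gsum_pos N gam : (forall j, (j < N)%nat -> 0 < gam j) -> 0 <= gsum N gam.
Proof. intros H. apply sumN_nonneg. intros; left; auto. Qed.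

Lemma G_bound N sm sx sr RM x y Sc gam u i : (2 <= N)%nat -> 0 < sx -> 0 < RM ->
  (forall j, (j < N)%nat -> 0 < gam j) -> (i < N)%nat ->
  Rabs (Gf N sm sx sr RM x y Sc gam u i) <=
  Aconst N sm Sc gam + Bconst N sm RM Sc gam * sumN N (fun j => Rabs (u j)).
Proof.
  intros HN Hsx HRM Hg Hi. unfold Gf, Aconst, Bconst.
  set (a := ln (Sc i / sm)). set (q := / INR (N - 1)).
  set (Sig := sum_ne N i _).
  set (S := sumN N (fun j => Rabs (u j))).
  assert (HS : 0 <= S) by (apply sumN_nonneg; intros; apply Rabs_pos).
  assert (Hq := invN1 N HN). fold q in Hq.
  assert (HSig : Rabs Sig <= / RM * S).
  { unfold Sig. eapply Rle_trans; [apply sum_ne_abs; lia|].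
    unfold S. rewrite <- sumN_scal. apply sumN_le. intros j Hj.
    unfold Rdiv at 1. eapply Rle_trans; [apply term_abs; apply cij_bound; auto|].
    right. field. lra. }
  assert (H1 : Rabs (1 - q * Sig) <= 1 + / RM * S).
  { unfold Rminus. eapply Rle_trans; [apply Rabs_triang|]. rewrite Rabs_R1, Rabs_Ropp, Rabs_mult.
    rewrite (Rabs_right q) by lra. assert (q * Rabs Sig <= 1 * Rabs Sig).
    { apply Rmult_le_compat_r; [apply Rabs_pos| lra]. } lra. }
  assert (Hgi := gsum_ge N gam i Hi Hg). assert (Hai := asum_ge N sm Sc i Hi). fold a in Hai.
  assert (Hgp := Hg i Hi). assert (Hap := asum_pos N sm Sc).
  assert (Hui : Rabs (u i) <= S) by (apply (sumN_term N (fun j => Rabs (u j))); auto; intros; apply Rabs_pos).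
  rewrite Rabs_mult, (Rabs_right (gam i)) by lra.
  assert (H2 : Rabs (a * (1 - q * Sig) - u i) <= Rabs a + (Rabs a / RM + 1) * S).
  { unfold Rminus at 1. eapply Rle_trans; [apply Rabs_triang|]. rewrite Rabs_Ropp, Rabs_mult.
    assert (Rabs a * Rabs (1 - q * Sig) <= Rabs a * (1 + / RM * S)) by (apply Rmult_le_compat_l; auto; apply Rabs_pos).
    unfold Rdiv. lra. }
  assert (H3 : Rabs a + (Rabs a / RM + 1) * S <= asum N sm Sc + (asum N sm Sc / RM + 1) * S).
  { apply Rplus_le_compat; auto. apply Rmult_le_compat_r; auto. unfold Rdiv.
    apply Rplus_le_compat_r. apply Rmult_le_compat_r; auto. left; apply Rinv_0_lt_compat; auto. }
  apply Rle_trans with (gsum N gam * (asum N sm Sc + (asum N sm Sc / RM + 1) * S)).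
  - apply Rmult_le_compat; try lra; apply Rabs_pos.
  - right; ring.
Qed.

Lemma G_lip N sm sx sr RM x y Sc gam w w' i K : (2 <= N)%nat -> 0 < sx -> 0 < sr -> 0 < RM -> 0 <= K ->
  (forall j, (j < N)%nat -> 0 < gam j) -> (i < N)%nat ->
  (forall j, (j < N)%nat -> Rabs (w j) <= K) -> (forall j, (j < N)%nat -> Rabs (w' j) <= K) ->
  Rabs (Gf N sm sx sr RM x y Sc gam w i - Gf N sm sx sr RM x y Sc gam w' i) <=
  LKc N sm sr RM Sc gam K * sumN N (fun j => Rabs (w j - w' j)).
Proof.
  intros HN Hsx Hsr HRM HK Hg Hi Hw Hw'. unfold Gf, LKc.
  set (a := ln (Sc i / sm)). set (q := / INR (N - 1)).
  set (S := sumN N (fun j => Rabs (w j - w' j))).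
  assert (HS : 0 <= S) by (apply sumN_nonneg; intros; apply Rabs_pos).
  assert (HSj : forall j, (j < N)%nat -> Rabs (w j - w' j) <= S)
    by (intros j Hj; apply (sumN_term N (fun j => Rabs (w j - w' j))); auto; intros; apply Rabs_pos).
  assert (Hq := invN1 N HN). fold q in Hq.
  assert (Hsr' : 0 < / sr) by (apply Rinv_0_lt_compat; auto).
  match goal with |- Rabs (gam i * (a * (1 - q * ?s1) - w i) - gam i * (a * (1 - q * ?s2) - w' i)) <= _ =>
    replace (gam i * (a * (1 - q * s1) - w i) - gam i * (a * (1 - q * s2) - w' i)) with
      (gam i * (- (a * q) * (s1 - s2) - (w i - w' i))) by ring;
    rewrite sum_ne_minus end.
  set (Sig := sum_ne N i _).
  assert (HSig : Rabs Sig <= INR N * ((1 + K * / sr) / RM) * S).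
  { unfold Sig. eapply Rle_trans; [apply sum_ne_abs; lia|].
    replace (INR N * ((1 + K * / sr) / RM) * S) with (sumN N (fun _ => (1 + K * / sr) / RM * S))
      by (rewrite sumN_const; ring).
    apply sumN_le. intros j Hj. unfold Rdiv at 1 2.
    eapply Rle_trans; [apply (term_lip (w j) (w i) (w' j) (w' i) (/ (2 * RM * (1 + dist2 (x i) (y i) (x j) (y j) ^ 2 / sx ^ 2))) (/ (2 * RM)) K (/ sr)); [apply cij_bound; auto | lra | lra | apply Hw'; auto]|].
    assert (H1 := HSj j Hj). assert (H2 := HSj i Hi).
    apply Rle_trans with (/ (2 * RM) * (2 * S + K * / sr * (S + S))).
    - apply Rmult_le_compat_l; [left; apply Rinv_0_lt_compat; lra|].
      apply Rplus_le_compat; [lra|]. apply Rmult_le_compat_l; [apply Rmult_le_pos; lra| lra].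
    - right. field. lra. }
  assert (Hgi := gsum_ge N gam i Hi Hg). assert (Hai := asum_ge N sm Sc i Hi). fold a in Hai.
  assert (Hgp := Hg i Hi). assert (Hap := asum_pos N sm Sc).
  assert (HC : 0 <= INR N * ((1 + K * / sr) / RM)).
  { apply Rmult_le_pos; [apply pos_INR|]. unfold Rdiv. apply Rmult_le_pos; [|left; apply Rinv_0_lt_compat; auto].
    assert (0 <= K * / sr) by (apply Rmult_le_pos; lra). lra. }
  rewrite Rabs_mult, (Rabs_right (gam i)) by lra.
  assert (H2 : Rabs (- (a * q) * Sig - (w i - w' i)) <= Rabs a * (INR N * ((1 + K * / sr) / RM) * S) + S).
  { unfold Rminus at 1. eapply Rle_trans; [apply Rabs_triang|]. rewrite Rabs_Ropp, Rabs_mult, Rabs_Ropp, Rabs_mult.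
    rewrite (Rabs_right q) by lra. assert (HH := HSj i Hi).
    assert (Rabs a * q * Rabs Sig <= Rabs a * 1 * (INR N * ((1 + K * / sr) / RM) * S)).
    { apply Rmult_le_compat; try lra.
      - apply Rmult_le_pos; [apply Rabs_pos| lra].
      - apply Rabs_pos.
      - apply Rmult_le_compat_l; [apply Rabs_pos| lra]. }
    lra. }
  apply Rle_trans with (gsum N gam * (asum N sm Sc * (INR N * ((1 + K * / sr) / RM) * S) + S)).
  - apply Rmult_le_compat; try lra; [apply Rabs_pos|].
    eapply Rle_trans; [apply H2|]. apply Rplus_le_compat_r. apply Rmult_le_compat_r; auto.
    apply Rmult_le_pos; auto.
  - right; ring.
Qed.


Record prm := { pN : nat; psm : R; psx : R; psr : R; pRM : R;
  px : nat -> R; py : nat -> R; pSc : nat -> R; pgam : nat -> R; ps0 : nat -> R }.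

Definition valid p := (2 <= pN p)%nat /\ 0 < psm p /\ 0 < psx p /\ 0 < psr p /\ 0 < pRM p /\
  (forall i, (i < pN p)%nat -> 0 < ps0 p i) /\ (forall i, (i < pN p)%nat -> 0 < pgam p i).

Definition GG p := Gf (pN p) (psm p) (psx p) (psr p) (pRM p) (px p) (py p) (pSc p) (pgam p).
Definition Ap p := Aconst (pN p) (psm p) (pSc p) (pgam p).
Definition Bp p := Bconst (pN p) (psm p) (pRM p) (pSc p) (pgam p).
Definition kapp p := Ap p * (INR (pN p) + 1) + 2 * Bp p * INR (pN p).
Definition u0p p (j : nat) := ln (ps0 p j / psm p).
Definition Phi p t := (1 + sumN (pN p) (fun j => u0p p j * u0p p j)) * exp (kapp p * t).
Definition clip K v := Rmax (- K) (Rmin K v).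
Definition GK p K (u : nat -> R) := GG p (fun j => clip K (u j)).
Definition Un p (n : nat) := Ufun (GK p (Phi p (INR n))) (u0p p).

Definition solG p T (u : nat -> R -> R) :=
  (forall i t, (i < pN p)%nat -> 0 <= t <= T -> continuity_pt (u i) t) /\
  (forall i t, (i < pN p)%nat -> 0 < t < T -> derivable_pt_lim (u i) t (GG p (fun j => u j t) i)) /\
  (forall j, (j < pN p)%nat -> u j 0 = u0p p j).

Lemma clip_abs K v : 0 <= K -> Rabs (clip K v) <= K.
Proof. intros HK. unfold clip, Rmax, Rmin. repeat destruct Rle_dec; unfold Rabs; destruct Rcase_abs; lra. Qed.
Lemma clip_le K v : 0 <= K -> Rabs (clip K v) <= Rabs v.
Proof. intros HK. unfold clip, Rmax, Rmin. repeat destruct Rle_dec; unfold Rabs; repeat destruct Rcase_abs; lra. Qed.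
Lemma clip_lip K a b : 0 <= K -> Rabs (clip K a - clip K b) <= Rabs (a - b).
Proof. intros HK. unfold clip, Rmax, Rmin. repeat destruct Rle_dec; unfold Rabs; repeat destruct Rcase_abs; lra. Qed.
Lemma clip_id K v : Rabs v <= K -> clip K v = v.
Proof. intros HK. unfold clip, Rmax, Rmin. repeat destruct Rle_dec; unfold Rabs in *; repeat destruct Rcase_abs; lra. Qed.

Lemma Ap_pos p : valid p -> 0 <= Ap p.
Proof. intros (HN & Hsm & Hsx & Hsr & HRM & Hs0 & Hg). unfold Ap, Aconst.
  apply Rmult_le_pos; [apply gsum_pos; auto| apply asum_pos]. Qed.
Lemma Bp_pos p : valid p -> 0 <= Bp p.
Proof. intros (HN & Hsm & Hsx & Hsr & HRM & Hs0 & Hg). unfold Bp, Bconst.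
  apply Rmult_le_pos; [apply gsum_pos; auto|]. assert (H := asum_pos (pN p) (psm p) (pSc p)).
  assert (0 <= asum (pN p) (psm p) (pSc p) / pRM p) by (apply Rmult_le_pos; [auto| left; apply Rinv_0_lt_compat; auto]).
  lra. Qed.
Lemma kapp_pos p : valid p -> 0 <= kapp p.
Proof. intros Hp. unfold kapp. assert (H1 := Ap_pos p Hp). assert (H2 := Bp_pos p Hp).
  assert (H3 := pos_INR (pN p)).
  assert (0 <= Ap p * (INR (pN p) + 1)) by (apply Rmult_le_pos; lra).
  assert (0 <= 2 * Bp p * INR (pN p)) by (apply Rmult_le_pos; lra). lra. Qed.
Lemma Phi_pos p t : 0 < Phi p t.
Proof. unfold Phi. apply Rmult_lt_0_compat; [|apply exp_pos].
  assert (0 <= sumN (pN p) (fun j => u0p p j * u0p p j)) by (apply sumN_nonneg; intros; apply Rle_0_sqr). lra. Qed.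
Lemma Phi_mono p t t' : valid p -> t <= t' -> Phi p t <= Phi p t'.
Proof. intros Hp H. unfold Phi. apply Rmult_le_compat_l.
  - assert (0 <= sumN (pN p) (fun j => u0p p j * u0p p j)) by (apply sumN_nonneg; intros; apply Rle_0_sqr). lra.
  - apply exp_mono. apply Rmult_le_compat_l; auto. apply kapp_pos; auto. Qed.

Lemma GG_bound p u i : valid p -> (i < pN p)%nat ->
  Rabs (GG p u i) <= Ap p + Bp p * sumN (pN p) (fun j => Rabs (u j)).
Proof. intros (HN & Hsm & Hsx & Hsr & HRM & Hs0 & Hg) Hi. apply G_bound; auto. Qed.

Lemma GG_lip p K w w' i : valid p -> 0 <= K -> (i < pN p)%nat ->
  (forall j, (j < pN p)%nat -> Rabs (w j) <= K) -> (forall j, (j < pN p)%nat -> Rabs (w' j) <= K) ->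
  Rabs (GG p w i - GG p w' i) <= LKc (pN p) (psm p) (psr p) (pRM p) (pSc p) (pgam p) K * sumN (pN p) (fun j => Rabs (w j - w' j)).
Proof. intros (HN & Hsm & Hsx & Hsr & HRM & Hs0 & Hg) HK Hi. apply G_lip; auto. Qed.

Lemma LKc_pos p K : valid p -> 0 <= K -> 0 <= LKc (pN p) (psm p) (psr p) (pRM p) (pSc p) (pgam p) K.
Proof. intros (HN & Hsm & Hsx & Hsr & HRM & Hs0 & Hg) HK. unfold LKc.
  apply Rmult_le_pos; [apply gsum_pos; auto|].
  assert (0 <= asum (pN p) (psm p) (pSc p) * (INR (pN p) * ((1 + K * / psr p) / pRM p))); [|lra].
  apply Rmult_le_pos; [apply asum_pos|]. apply Rmult_le_pos; [apply pos_INR|].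
  apply Rmult_le_pos; [|left; apply Rinv_0_lt_compat; auto].
  assert (0 <= K * / psr p) by (apply Rmult_le_pos; [auto| left; apply Rinv_0_lt_compat; auto]). lra. Qed.

Lemma GK_Flip p K : valid p -> 0 <= K -> Flip (pN p) (GK p K) (LKc (pN p) (psm p) (psr p) (pRM p) (pSc p) (pgam p) K).
Proof.
  intros Hp HK u v i Hi. unfold GK. eapply Rle_trans; [apply (GG_lip p K); auto; intros; apply clip_abs; auto|].
  apply Rmult_le_compat_l; [apply LKc_pos; auto|]. apply sumN_le. intros; apply clip_lip; auto.
Qed.

Lemma GK_growth p K u i : valid p -> 0 <= K -> (i < pN p)%nat ->
  Rabs (GK p K u i) <= Ap p + Bp p * sumN (pN p) (fun j => Rabs (u j)).
Proof.
  intros Hp HK Hi. unfold GK. eapply Rle_trans; [apply GG_bound; auto|].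
  apply Rplus_le_compat_l. apply Rmult_le_compat_l; [apply Bp_pos; auto|].
  apply sumN_le. intros; apply clip_le; auto.
Qed.

Lemma GK_Fbnd p K : valid p -> 0 <= K -> Fbnd (pN p) (GK p K) (Ap p + Bp p * (INR (pN p) * K)).
Proof.
  intros Hp HK u i Hi. unfold GK. eapply Rle_trans; [apply GG_bound; auto|].
  apply Rplus_le_compat_l. apply Rmult_le_compat_l; [apply Bp_pos; auto|].
  rewrite <- sumN_const. apply sumN_le. intros; apply clip_abs; auto.
Qed.


Lemma GG_ext p u v i : (i < pN p)%nat -> (forall j, (j < pN p)%nat -> u j = v j) -> GG p u i = GG p v i.
Proof. intros. unfold GG. apply Gf_ext; auto. Qed.

Lemma solG_bound p T u : valid p -> solG p T u ->
  forall i t, (i < pN p)%nat -> 0 <= t <= T -> Rabs (u i t) <= Phi p t.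
Proof.
  intros Hp (Hc & Hd & H0) i t Hi Ht.
  assert (H := apriori (pN p) u (fun i t => GG p (fun j => u j t) i) (Ap p) (Bp p) T
    (Ap_pos p Hp) (Bp_pos p Hp) Hc Hd ltac:(intros; apply GG_bound; auto) i t Hi Ht).
  rewrite (sumN_ext _ _ (fun j => u0p p j * u0p p j)) in H by (intros j Hj; rewrite H0; auto).
  exact H.
Qed.

Lemma solG_uniq p T u v : valid p -> solG p T u -> solG p T v ->
  forall i t, (i < pN p)%nat -> 0 <= t <= T -> u i t = v i t.
Proof.
  intros Hp Hu Hv.
  assert (Bu := solG_bound p T u Hp Hu). assert (Bv := solG_bound p T v Hp Hv).
  destruct Hu as (Hcu & Hdu & H0u). destruct Hv as (Hcv & Hdv & H0v).
  intros i t Hi Ht.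
  apply (uniq_gen (pN p) (GG p) u v T (Phi p T) (LKc (pN p) (psm p) (psr p) (pRM p) (pSc p) (pgam p) (Phi p T)));
    auto.
  - apply LKc_pos; auto. left; apply Phi_pos.
  - intros w w' k Hk Hw Hw'. apply GG_lip; auto. left; apply Phi_pos.
  - intros j s Hj Hs. eapply Rle_trans; [apply Bu; auto|]. apply Phi_mono; auto; lra.
  - intros j s Hj Hs. eapply Rle_trans; [apply Bv; auto|]. apply Phi_mono; auto; lra.
  - intros j Hj. rewrite H0u, H0v; auto.
Qed.

Lemma Un_picard p n : valid p ->
  (forall i, (i < pN p)%nat -> Un p n i 0 = u0p p i) /\
  (forall i t, (i < pN p)%nat -> continuity_pt (Un p n i) t) /\
  (forall i t, (i < pN p)%nat -> 0 <= t -> derivable_pt_lim (Un p n i) t (GK p (Phi p (INR n)) (fun j => Un p n j t) i)).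
Proof.
  intros Hp. assert (HK : 0 <= Phi p (INR n)) by (left; apply Phi_pos).
  unfold Un. apply (picard (pN p) _ (LKc (pN p) (psm p) (psr p) (pRM p) (pSc p) (pgam p) (Phi p (INR n)))
    (Ap p + Bp p * (INR (pN p) * Phi p (INR n)))).
  - apply GK_Flip; auto.
  - apply GK_Fbnd; auto.
  - apply LKc_pos; auto.
  - assert (H1 := Ap_pos p Hp). assert (H2 := Bp_pos p Hp).
    assert (0 <= Bp p * (INR (pN p) * Phi p (INR n))) by (apply Rmult_le_pos; auto; apply Rmult_le_pos; auto; apply pos_INR).
    lra.
Qed.

Lemma Un_bound p n : valid p -> forall i t, (i < pN p)%nat -> 0 <= t -> Rabs (Un p n i t) <= Phi p t.
Proof.
  intros Hp i t Hi Ht. destruct (Un_picard p n Hp) as (H0 & Hc & Hd).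
  assert (H := apriori (pN p) (Un p n) (fun i t => GK p (Phi p (INR n)) (fun j => Un p n j t) i) (Ap p) (Bp p) t
    (Ap_pos p Hp) (Bp_pos p Hp) ltac:(intros; auto) ltac:(intros; apply Hd; auto; lra)
    ltac:(intros; apply GK_growth; auto; left; apply Phi_pos) i t Hi ltac:(lra)).
  rewrite (sumN_ext _ _ (fun j => u0p p j * u0p p j)) in H by (intros j Hj; rewrite H0; auto).
  exact H.
Qed.

Lemma Un_solG p n : valid p -> solG p (INR n) (Un p n).
Proof.
  intros Hp. destruct (Un_picard p n Hp) as (H0 & Hc & Hd). split; [|split]; auto.
  intros i t Hi Ht. replace (GG p (fun j => Un p n j t) i) with (GK p (Phi p (INR n)) (fun j => Un p n j t) i).
  - apply Hd; auto; lra.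
  - unfold GK. apply GG_ext; auto. intros j Hj. apply clip_id.
    eapply Rle_trans; [apply Un_bound; auto; lra|]. apply Phi_mono; auto; lra.
Qed.

Definition nt (t : R) := Z.to_nat (up t).

Lemma nt_ge t : 0 <= t -> t <= INR (nt t).
Proof.
  intros Ht. unfold nt. destruct (archimed t) as [H1 _].
  assert (Hz : (0 < up t)%Z) by (apply lt_0_IZR; lra).
  rewrite INR_IZR_INZ, Z2Nat.id by lia. lra.
Qed.

Definition usol p i t := Un p (nt t) i t.

Lemma usol_agree p m i t : valid p -> (i < pN p)%nat -> 0 <= t <= INR m -> usol p i t = Un p m i t.
Proof.
  intros Hp Hi Ht. unfold usol.
  apply (solG_uniq p (Rmin (INR (nt t)) (INR m))); auto.
  - destruct (Un_solG p (nt t) Hp) as (Hc & Hd & H0). split; [|split]; auto.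
    + intros; apply Hc; auto. assert (Rmin (INR (nt t)) (INR m) <= INR (nt t)) by apply Rmin_l. lra.
    + intros; apply Hd; auto. assert (Rmin (INR (nt t)) (INR m) <= INR (nt t)) by apply Rmin_l. lra.
  - destruct (Un_solG p m Hp) as (Hc & Hd & H0). split; [|split]; auto.
    + intros; apply Hc; auto. assert (Rmin (INR (nt t)) (INR m) <= INR m) by apply Rmin_r. lra.
    + intros; apply Hd; auto. assert (Rmin (INR (nt t)) (INR m) <= INR m) by apply Rmin_r. lra.
  - split; [lra|]. apply Rmin_glb; [apply nt_ge|]; lra.
Qed.


Lemma ball_R (a e b : R) : ball a e b <-> Rabs (b - a) < e.
Proof. unfold ball; simpl; unfold AbsRing_ball; simpl. unfold abs, minus, plus, opp; simpl. tauto. Qed.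

Lemma dpl_to_hdr f g t l : 0 <= t -> derivable_pt_lim g t l ->
  (forall tau, 0 <= tau < t + 1 -> f tau = g tau) -> has_deriv_Rplus f t l.
Proof.
  intros Ht Hd Hfg. unfold has_deriv_Rplus. apply filterlim_locally. intros eps.
  destruct (Hd eps (cond_pos eps)) as [delta Hdel].
  assert (Hp : 0 < Rmin delta 1) by (apply Rmin_pos; [apply cond_pos| lra]).
  exists (mkposreal _ Hp). intros y Hy [Hy0 Hyt]. apply ball_R in Hy. change (Rabs (y - t) < Rmin delta 1) in Hy. apply ball_R.
  assert (H1 := Rmin_l delta 1). assert (H2 := Rmin_r delta 1).
  assert (Hy1 : Rabs (y - t) < 1) by lra.
  rewrite (Hfg y), (Hfg t) by (split; [lra|]; unfold Rabs in Hy1; destruct Rcase_abs in Hy1; lra).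
  specialize (Hdel (y - t) ltac:(lra) ltac:(lra)).
  rewrite Rplus_minus in Hdel. exact Hdel.
Qed.

Lemma GK_eq_GG p n i t : valid p -> (i < pN p)%nat -> 0 <= t <= INR n ->
  GK p (Phi p (INR n)) (fun j => Un p n j t) i = GG p (fun j => Un p n j t) i.
Proof.
  intros Hp Hi Ht. unfold GK. apply GG_ext; auto. intros j Hj. apply clip_id.
  eapply Rle_trans; [apply Un_bound; auto; lra|]. apply Phi_mono; auto; lra.
Qed.

Definition ssol p i t := psm p * exp (usol p i t).

Lemma exist_sol p : valid p ->
  is_solution (pN p) (psm p) (psx p) (psr p) (pRM p) (px p) (py p) (pSc p) (pgam p) (ps0 p) (ssol p).
Proof.
  intros Hp. assert (Hp' := Hp). destruct Hp' as (HN & Hsm & Hsx & Hsr & HRM & Hs0 & Hg). split.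
  - intros i Hi. unfold ssol, usol. destruct (Un_picard p (nt 0) Hp) as (H0 & _ & _).
    rewrite H0 by auto. unfold u0p. rewrite exp_ln.
    + field. lra.
    + apply Rdiv_lt_0_compat; auto.
  - intros i t Hi Ht. set (m := nt (t + 1)).
    assert (Hm : t + 1 <= INR m) by (apply nt_ge; lra).
    destruct (Un_picard p m Hp) as (_ & _ & Hd).
    apply (dpl_to_hdr _ (fun tau => psm p * exp (Un p m i tau))); [exact Ht| |].
    + replace (rhs (pN p) (psm p) (psx p) (psr p) (pRM p) (px p) (py p) (pSc p) (pgam p) (fun j => ssol p j t) i)
        with (psm p * (exp (Un p m i t) * GK p (Phi p (INR m)) (fun j => Un p m j t) i)).
      * apply derivable_pt_lim_scal.
        apply (derivable_pt_lim_comp (Un p m i) exp). { apply Hd; auto. } apply derivable_pt_lim_exp.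
      * rewrite (rhs_ext _ _ _ _ _ _ _ _ _ _ (fun j => psm p * exp (Un p m j t))); [|exact Hi|].
        -- rewrite rhs_exp; [|exact Hsm|exact Hi]. rewrite (GK_eq_GG p m i t Hp Hi) by lra. unfold GG. ring.
        -- intros j Hj. unfold ssol. rewrite (usol_agree p m); auto. lra.
    + intros tau Htau. unfold ssol. rewrite (usol_agree p m); auto. lra.
Qed.


Lemma hdr_within f t l : has_deriv_Rplus f t l -> forall eps, 0 < eps ->
  exists delta, 0 < delta /\ forall y, Rabs (y - t) < delta -> 0 <= y -> y <> t ->
    Rabs ((f y - f t) / (y - t) - l) < eps.
Proof.
  intros H eps He. unfold has_deriv_Rplus in H. rewrite filterlim_locally in H.
  destruct (H (mkposreal eps He)) as [delta Hd]. exists delta. split; [apply cond_pos|].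
  intros y Hy Hy0 Hyt. assert (Hb := Hd y). rewrite ball_R in Hb.
  specialize (Hb Hy (conj Hy0 Hyt)). rewrite ball_R in Hb. exact Hb.
Qed.

Lemma hdr_deriv f t l : has_deriv_Rplus f t l -> 0 < t -> derivable_pt_lim f t l.
Proof.
  intros H Ht eps He. destruct (hdr_within f t l H eps He) as [delta [Hd H1]].
  assert (Hp : 0 < Rmin delta t) by (apply Rmin_pos; lra).
  exists (mkposreal _ Hp). intros h Hh Hh2. change (Rabs h < Rmin delta t) in Hh2.
  assert (H2 := Rmin_l delta t). assert (H3 := Rmin_r delta t).
  specialize (H1 (t + h)). replace (t + h - t) with h in H1 by ring.
  apply H1; [lra| unfold Rabs in Hh2; destruct Rcase_abs in Hh2; lra| intro E0; apply Hh; lra].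
Qed.

Lemma hdr_cont0 f l : has_deriv_Rplus f 0 l -> forall eps, 0 < eps ->
  exists delta, 0 < delta /\ forall u, 0 <= u < delta -> Rabs (f u - f 0) < eps.
Proof.
  intros H eps He. destruct (hdr_within f 0 l H 1 ltac:(lra)) as [d1 [Hd1 H1]].
  assert (Hl : 0 < Rabs l + 1) by (assert (H0 := Rabs_pos l); lra).
  assert (Hp : 0 < Rmin d1 (eps / (Rabs l + 1))) by (apply Rmin_pos; [lra| apply Rdiv_lt_0_compat; lra]).
  exists (Rmin d1 (eps / (Rabs l + 1))). split; auto.
  intros u [Hu0 Hu1]. assert (H2 := Rmin_l d1 (eps / (Rabs l + 1))). assert (H3 := Rmin_r d1 (eps / (Rabs l + 1))).
  destruct (Req_dec u 0) as [E|E].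
  - subst. rewrite Rminus_diag, Rabs_R0. lra.
  - specialize (H1 u). rewrite Rminus_0_r in H1. assert (Hq := H1 ltac:(rewrite Rabs_right; lra) Hu0 E).
    replace (f u - f 0) with (u * ((f u - f 0) / u)) by (field; auto).
    rewrite Rabs_mult, Rabs_right by lra.
    assert (Hq2 : Rabs ((f u - f 0) / u) < Rabs l + 1).
    { replace ((f u - f 0) / u) with (((f u - f 0) / u - l) + l) by ring.
      eapply Rle_lt_trans; [apply Rabs_triang|]. lra. }
    apply Rle_lt_trans with (u * (Rabs l + 1)).
    + apply Rmult_le_compat_l; lra.
    + assert (Hu2 : u < eps / (Rabs l + 1)) by lra.
      apply (Rmult_lt_compat_r (Rabs l + 1)) in Hu2; auto.
      unfold Rdiv in Hu2. rewrite Rmult_assoc, Rinv_l in Hu2 by lra. lra.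
Qed.

Lemma cont_eps f x : continuity_pt f x -> forall eps, 0 < eps ->
  exists a, 0 < a /\ forall y, Rabs (y - x) < a -> Rabs (f y - f x) < eps.
Proof.
  intros H eps He. destruct (H eps He) as [a [Ha H1]]. exists a. split; auto.
  intros y Hy. destruct (Req_dec y x) as [E|E].
  - subst. rewrite Rminus_diag, Rabs_R0. lra.
  - apply (H1 y). split; [split; [exact I| auto]| exact Hy].
Qed.

Lemma eps_cont f x : (forall eps, 0 < eps ->
  exists a, 0 < a /\ forall y, Rabs (y - x) < a -> Rabs (f y - f x) < eps) -> continuity_pt f x.
Proof.
  intros H eps He. destruct (H eps He) as [a [Ha H1]]. exists a. split; auto.
  intros y [_ Hy]. apply H1. exact Hy.
Qed.

Lemma dpl_ext f g x l a : 0 < a -> (forall y, Rabs (y - x) < a -> f y = g y) ->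
  derivable_pt_lim f x l -> derivable_pt_lim g x l.
Proof.
  intros Ha Hfg H eps He. destruct (H eps He) as [d Hd].
  assert (Hp : 0 < Rmin d a) by (apply Rmin_pos; [apply cond_pos| lra]).
  exists (mkposreal _ Hp). intros h Hh Hh2. change (Rabs h < Rmin d a) in Hh2.
  assert (H2 := Rmin_l d a). assert (H3 := Rmin_r d a).
  rewrite <- (Hfg (x + h)), <- (Hfg x).
  - apply Hd; auto. lra.
  - rewrite Rminus_diag, Rabs_R0; lra.
  - replace (x + h - x) with h by ring. lra.
Qed.

Lemma shat_cont f l : (forall t, 0 <= t -> has_deriv_Rplus f t (l t)) ->
  forall t, 0 <= t -> continuity_pt (fun tau => f (Rmax 0 tau)) t.
Proof.
  intros H t Ht. destruct (Req_dec t 0) as [E|E].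
  - subst. apply eps_cont. intros eps He.
    destruct (hdr_cont0 f (l 0) (H 0 ltac:(lra)) eps He) as [d [Hd H1]].
    exists d. split; auto. intros y Hy. rewrite Rminus_0_r in Hy.
    rewrite (Rmax_left 0 0) by lra. apply H1. split; [apply Rmax_l|].
    unfold Rmax; destruct Rle_dec; [|lra]. unfold Rabs in Hy; destruct Rcase_abs in Hy; lra.
  - assert (Ht' : 0 < t) by lra.
    apply (continuity_pt_locally_ext f _ t t Ht').
    + intros y Hy. unfold R_dist in Hy. rewrite Rmax_right; auto.
      unfold Rabs in Hy; destruct Rcase_abs in Hy; lra.
    + apply derivable_continuous_pt. exists (l t). apply hdr_deriv; auto.
Qed.

Lemma fin_eta n (P : nat -> R -> Prop) : (forall i e e', P i e -> 0 < e' <= e -> P i e') ->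
  (forall i, (i < n)%nat -> exists e, 0 < e /\ P i e) -> exists e, 0 < e /\ forall i, (i < n)%nat -> P i e.
Proof.
  intros Hm. induction n; intros H.
  - exists 1. split; [lra| intros; lia].
  - destruct IHn as [e1 [He1 H1]]. { intros; apply H; lia. }
    destruct (H n ltac:(lia)) as [e2 [He2 H2]].
    exists (Rmin e1 e2). split; [apply Rmin_pos; auto|].
    intros i Hi. destruct (Nat.eq_dec i n).
    + subst. apply (Hm n e2); auto. split; [apply Rmin_pos; auto| apply Rmin_r].
    + apply (Hm i e1); [apply H1; lia|]. split; [apply Rmin_pos; auto| apply Rmin_l].
Qed.


Definition isS p s := is_solution (pN p) (psm p) (psx p) (psr p) (pRM p) (px p) (py p) (pSc p) (pgam p) (ps0 p) s.
Definition vfun p (s : nat -> R -> R) i tau := ln (s i (Rmax 0 tau) / psm p).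
Definition goodP p (s : nat -> R -> R) T := forall i tau, (i < pN p)%nat -> 0 <= tau <= T -> 0 < s i tau.

Lemma dpl_divc f x l c : derivable_pt_lim f x l -> derivable_pt_lim (fun y => f y / c) x (l / c).
Proof.
  intros H. replace (l / c) with (l * / c + f x * 0) by (unfold Rdiv; ring).
  apply (derivable_pt_lim_mult f (fun _ => / c)); auto. apply derivable_pt_lim_const.
Qed.

Lemma s_exp_v p s T i tau : valid p -> goodP p s T -> (i < pN p)%nat -> 0 <= tau <= T ->
  s i tau = psm p * exp (vfun p s i tau).
Proof.
  intros Hp Hg Hi Ht. unfold goodP in Hg. destruct Hp as (HN & Hsm & _). unfold vfun. rewrite Rmax_right by lra.
  rewrite exp_ln.
  - field. lra.
  - apply Rdiv_lt_0_compat; auto.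
Qed.

Lemma v_solG p s T : valid p -> isS p s -> goodP p s T -> solG p T (vfun p s).
Proof.
  intros Hp [Hs0 Hsd] Hg. unfold goodP in Hg. assert (Hp' := Hp). destruct Hp' as (HN & Hsm & Hsx & Hsr & HRM & Hs0p & Hgam).
  split; [|split].
  - intros i t Hi Ht. unfold vfun.
    apply (continuity_pt_comp (fun tau => s i (Rmax 0 tau) / psm p) ln).
    + apply (continuity_pt_mult (fun tau => s i (Rmax 0 tau)) (fun _ => / psm p)).
      * apply (shat_cont (s i) (fun t => rhs (pN p) (psm p) (psx p) (psr p) (pRM p) (px p) (py p) (pSc p) (pgam p) (fun j => s j t) i)); [intros; apply Hsd; auto| lra].
      * apply continuity_pt_const; intros ? ?; auto.
    + apply derivable_continuous_pt. exists (/ (s i (Rmax 0 t) / psm p)). apply derivable_pt_lim_ln.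
      rewrite Rmax_right by lra. apply Rdiv_lt_0_compat; [apply Hg; auto| exact Hsm].
  - intros i t Hi Ht.
    assert (Hd := hdr_deriv (s i) t _ (Hsd i t Hi ltac:(lra)) ltac:(lra)).
    assert (Hd2 := dpl_ext (s i) (fun tau => s i (Rmax 0 tau)) t _ t ltac:(lra)
      ltac:(intros y Hy; cbv beta; rewrite Rmax_right; auto; unfold Rabs in Hy; destruct Rcase_abs in Hy; lra) Hd).
    assert (Hd3 := dpl_divc _ _ _ (psm p) Hd2).
    assert (Hpos : 0 < s i t) by (apply Hg; auto; lra).
    assert (Hd4 := derivable_pt_lim_comp (fun tau => s i (Rmax 0 tau) / psm p) ln t _ (/ (s i (Rmax 0 t) / psm p)) Hd3
      ltac:(apply derivable_pt_lim_ln; rewrite Rmax_right by lra; apply Rdiv_lt_0_compat; auto)).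
    match type of Hd4 with derivable_pt_lim _ _ ?L => replace (GG p _ i) with L end.
    + exact Hd4.
    + rewrite Rmax_right by lra.
      rewrite (rhs_ext _ _ _ _ _ _ _ _ _ _ (fun j => psm p * exp (vfun p s j t))); [|exact Hi|].
      * rewrite rhs_exp; [|exact Hsm| exact Hi].
        replace (exp (vfun p s i t)) with (s i t / psm p).
        -- unfold GG. field. lra.
        -- unfold vfun. rewrite Rmax_right by lra. rewrite exp_ln by (apply Rdiv_lt_0_compat; auto). reflexivity.
      * intros j Hj. apply (s_exp_v p s T); auto. lra.
  - intros j Hj. unfold vfun, u0p. rewrite Rmax_left by lra. rewrite Hs0; auto.
Qed.

Lemma s_lower p s T i tau : valid p -> isS p s -> 0 <= T -> goodP p s T -> (i < pN p)%nat -> 0 <= tau <= T ->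
  psm p * exp (- Phi p T) <= s i tau.
Proof.
  intros Hp Hs HT Hg Hi Ht. assert (Hsm : 0 < psm p) by (destruct Hp as (_ & H & _); auto).
  rewrite (s_exp_v p s T i tau) by auto.
  apply Rmult_le_compat_l; [lra|]. apply exp_mono.
  assert (H := solG_bound p T (vfun p s) Hp (v_solG p s T Hp Hs Hg) i tau Hi Ht).
  assert (H2 := Phi_mono p tau T Hp ltac:(lra)).
  unfold Rabs in H; destruct Rcase_abs in H; lra.
Qed.


Lemma goodP_mono p s T T' : goodP p s T -> T' <= T -> goodP p s T'.
Proof. intros H HT i tau Hi Ht. apply H; auto; lra. Qed.

Lemma positivity p s : valid p -> isS p s -> forall T, 0 <= T -> goodP p s T.
Proof.
  intros Hp Hs T0 HT0. apply NNPP. intros Hbad.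
  assert (Hp' := Hp). destruct Hp' as (HN & Hsm & Hsx & Hsr & HRM & Hs0p & Hgam).
  assert (Hs' := Hs). destruct Hs' as [Hs0 Hsd].
  set (E := fun T => 0 <= T /\ goodP p s T).
  assert (Hub : forall T, E T -> T <= T0).
  { intros T [HT HgT]. destruct (Rle_dec T T0) as [|Hn]; auto. exfalso. apply Hbad.
    apply (goodP_mono p s T); auto; lra. }
  assert (HE0 : E 0).
  { split; [lra|]. intros i tau Hi Ht. replace tau with 0 by lra. rewrite Hs0; auto. }
  destruct (completeness E ltac:(exists T0; intros T HT; apply Hub; auto) ltac:(exists 0; auto)) as [ts [Hts1 Hts2]].
  assert (Hts0 : 0 <= ts) by (apply Hts1; auto).
  assert (Hbelow : forall T, 0 <= T < ts -> goodP p s T).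
  { intros T HT. apply NNPP. intros Hn.
    assert (ts <= T); [|lra]. apply Hts2. intros T' [HT' HgT'].
    destruct (Rle_dec T' T) as [|Hn2]; auto. exfalso. apply Hn. apply (goodP_mono p s T'); auto; lra. }
  assert (Hcont : forall i, (i < pN p)%nat -> continuity_pt (fun tau => s i (Rmax 0 tau)) ts).
  { intros i Hi. apply (shat_cont (s i) (fun t => rhs (pN p) (psm p) (psx p) (psr p) (pRM p) (px p) (py p) (pSc p) (pgam p) (fun j => s j t) i)); auto. }
  assert (Hpos : forall i, (i < pN p)%nat -> 0 < s i ts).
  { intros i Hi. destruct (Req_dec ts 0) as [Z|Z].
    - rewrite Z, Hs0; auto.
    - destruct (Rlt_le_dec 0 (s i ts)) as [|Hle]; auto. exfalso.
      set (dl := psm p * exp (- Phi p ts)).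
      assert (Hdl : 0 < dl) by (apply Rmult_lt_0_compat; auto; apply exp_pos).
      destruct (cont_eps _ _ (Hcont i Hi) dl Hdl) as [a [Ha Hca]].
      set (tau := ts - Rmin a ts / 2).
      assert (Hm1 := Rmin_l a ts). assert (Hm2 := Rmin_r a ts).
      assert (Hm0 : 0 < Rmin a ts) by (apply Rmin_pos; lra).
      assert (Htau : 0 <= tau < ts) by (unfold tau; lra).
      assert (Hlow := s_lower p s tau i tau Hp Hs ltac:(lra) (Hbelow tau Htau) Hi ltac:(lra)).
      assert (Hlow2 : psm p * exp (- Phi p ts) <= psm p * exp (- Phi p tau)).
      { apply Rmult_le_compat_l; [lra|]. apply exp_mono. assert (Phi p tau <= Phi p ts) by (apply Phi_mono; auto; lra). lra. }
      specialize (Hca tau ltac:(unfold tau; rewrite Rabs_left by lra; lra)).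
      rewrite (Rmax_right 0 tau), (Rmax_right 0 ts) in Hca by lra.
      fold dl in Hlow2. unfold Rabs in Hca; destruct Rcase_abs in Hca; lra. }
  assert (Hgts : goodP p s ts).
  { intros i tau Hi Ht. destruct (Req_dec tau ts) as [Z|Z].
    - rewrite Z; auto.
    - apply (Hbelow tau); auto; lra. }
  destruct (fin_eta (pN p) (fun i e => forall tau, ts <= tau < ts + e -> 0 < s i tau)) as [e [He He2]].
  - intros i e e' H1 H2 tau Ht. apply H1. lra.
  - intros i Hi. destruct (cont_eps _ _ (Hcont i Hi) (s i ts) (Hpos i Hi)) as [a [Ha Hca]].
    exists a. split; auto. intros tau Ht. specialize (Hca tau ltac:(rewrite Rabs_right; lra)).
    rewrite (Rmax_right 0 tau), (Rmax_right 0 ts) in Hca by lra.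
    unfold Rabs in Hca; destruct Rcase_abs in Hca; lra.
  - assert (E (ts + e / 2)).
    { split; [lra|]. intros i tau Hi Ht. destruct (Rle_dec tau ts).
      - apply Hgts; auto; lra.
      - apply He2; auto; lra. }
    assert (ts + e / 2 <= ts) by (apply Hts1; auto). lra.
Qed.

Lemma uniqueness p s : valid p -> isS p s -> forall i t, (i < pN p)%nat -> 0 <= t -> s i t = ssol p i t.
Proof.
  intros Hp Hs i t Hi Ht. set (m := nt t). assert (Hm : t <= INR m) by (apply nt_ge; auto).
  assert (Hg := positivity p s Hp Hs (INR m) ltac:(lra)).
  rewrite (s_exp_v p s (INR m)) by (auto; lra). unfold ssol.
  rewrite (usol_agree p m) by (auto; lra).
  f_equal. f_equal.
  apply (solG_uniq p (INR m)); [exact Hp | apply v_solG; auto | apply Un_solG; auto | exact Hi | lra].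
Qed.

Theorem proposition1 (N : nat) (sm sx sr RM : R) (s0 x y Sc gam : nat -> R) :
  (2 <= N)%nat ->
  0 < sm -> 0 < sx -> 0 < sr -> 0 < RM ->
  (forall i, (i < N)%nat -> 0 < s0 i) ->
  (forall i, (i < N)%nat -> 0 < Sc i) ->
  (forall i, (i < N)%nat -> 0 < gam i) ->
  (forall i, (i < N)%nat -> ln (Sc i / sm) <= RM) ->
  exists s : nat -> R -> R,
    is_solution N sm sx sr RM x y Sc gam s0 s /\
    (forall i t, (i < N)%nat -> 0 <= t -> 0 < s i t) /\
    (forall s' : nat -> R -> R, is_solution N sm sx sr RM x y Sc gam s0 s' ->
       forall i t, (i < N)%nat -> 0 <= t -> s' i t = s i t).

Proof.
  intros HN Hsm Hsx Hsr HRM Hs0 HSc Hgam HRM2.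
  set (p := Build_prm N sm sx sr RM x y Sc gam s0).
  assert (Hp : valid p) by (unfold valid; simpl; repeat split; auto).
  exists (ssol p). split; [|split].
  - exact (exist_sol p Hp).
  - intros i t Hi Ht. unfold ssol. apply Rmult_lt_0_compat; [exact Hsm| apply exp_pos].
  - intros s' Hs' i t Hi Ht. exact (uniqueness p s' Hp Hs' i t Hi Ht).
Qed.
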